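(* Let $t(x_1,\dots,x_n)$ be any Łukasiewicz $\mu$-term. For every input vector $\vec r=(r_1,\dots,r_n)\in[0,1]^n$, the evaluation algorithm described in the context terminates with a conditioned linear expression $C_{\vec r}\vdash e_{\vec r}$ in variables $x_1,\dots,x_n$ satisfying (P1) $C_{\vec r}(\vec r)$ is true, and (P2) for all $\vec s\in\mathbb R^n$, if $C_{\vec r}(\vec s)$ is true then $\vec s\in[0,1]^n$ and $e_{\vec r}(\vec s)=t(\vec s)$. Moreover, the set $\{C_{\vec r}\vdash e_{\vec r}\mid\vec r\in[0,1]^n\}$ of possible results is finite, and hence is a system of conditioned linear expressions representing the function $t:[0,1]^n\to[0,1]$.
   Context: Łukasiewicz $\mu$-terms: $t::=x\mid\underline0\mid\underline1\mid r\,t\mid t\sqcup t\mid t\sqcap t\mid t\oplus t\mid t\odot t\mid\mu x.t\mid\nu x.t$, with $r\in[0,1]$ real; $\mu,\nu$ bind. $t(x_1,\dots,x_n)$ means free variables are among $x_1,\dots,x_n$. Value at $\vec r\in[0,1]^n$: $x_i\mapsto r_i$, $\underline0\mapsto0$, $\underline1\mapsto1$, $r\,t\mapsto r\cdot t(\vec r)$, $\sqcup,\sqcap$ max/min, $t_1\oplus t_2\mapsto\min(t_1(\vec r)+t_2(\vec r),1)$, $t_1\odot t_2\mapsto\max(t_1(\vec r)+t_2(\vec r)-1,0)$, $(\mu y.t)(\vec r)$ and $(\nu y.t)(\vec r)$ the least and greatest fixed points of the monotone map $r'\mapsto t(\vec r,r')$ on $[0,1]$. A linear expression in $x_1,\dots,x_n$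 is $q_1x_1+\dots+q_nx_n+q$ ($q_i,q$ real). A conditioned linear expression $C\vdash e$ consists of a linear expression $e$ and a finite set $C$ of inequalities $e_1<e_2$ or $e_1\le e_2$ between linear expressions; $C(\vec r)$ is the conjunction of its instances. A finite set $\mathcal F$ of conditioned linear expressions represents $f:[0,1]^n\to[0,1]$ if for every $\vec r\in[0,1]^n$ some $(C\vdash e)\in\mathcal F$ has $C(\vec r)$ true, and whenever $(C\vdash e)\in\mathcal F$ and $C(\vec r)$ is true ($\vec r\in[0,1]^n$), $e(\vec r)=f(\vec r)$. For an expression/constraint in $x_1,\dots,x_{n+1}$, $C(x_1,\dots,x_n,d)$ denotes substitution of a linear expression $d(x_1,\dots,x_n)$ for $x_{n+1}$. The algorithm (real-number model of computation) on input $t(x_1,\dots,x_n)$ and $\vec r$ returns $C\vdash e$, recursively on $t$. Atoms: return the range constraints $\{0\le x_k\le1\}_k$ with $e$ equal to $x_i$, $0$ or $1$. For compound non-fixed-point terms, recursively obtain $C_i\vdash e_i$ for the subterms and return the union of the $C_i$ together with the constraint selecting the linear piece of the connective valid at $\vec r$; e.g. for $t_1\oplus t_2$: if $e_1(\vec r)+e_2(\vec r)\le1$ return $C_1,C_2,e_1+e_2\le1\vdash e_1+e_2$, otherwise $C_1,C_2,e_1+e_2\ge1\vdash 1$ (analogously for $\sqcup,\sqcap,\odot$; for $r\,t_1$ return $C_1\vdash r e_1$). For $\mu x_{n+1}.t'$: start with $D=\emptyset$, $d=0$. Loop: recursively compute $t'$ at $(\vec r,d(\vec r))$ as $C\vdash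 e$ with $e=q_1x_1+\dots+q_nx_n+q_{n+1}x_{n+1}+q$. If $q_{n+1}\ne1$, let $f=\frac1{1-q_{n+1}}(q_1x_1+\dots+q_nx_n+q)$; if $C(\vec r,f(\vec r))$ holds, return $D\cup C(\vec x,d(\vec x))\cup C(\vec x,f(\vec x))\vdash f$; otherwise let $N$ be the negation of $e_1(\vec x,f(\vec x))\vartriangleleft e_2(\vec x,f(\vec x))$ for a chosen inequality $e_1\vartriangleleft e_2$ of $C$ false at $(\vec r,f(\vec r))$, and go to the next-approximation step. If $q_{n+1}=1$: if $q_1r_1+\dots+q_nr_n+q=0$ return $D\cup C(\vec x,d(\vec x))\cup\{q_1x_1+\dots+q_nx_n+q=0\}\vdash d$; otherwise let $N$ be whichever of $q_1x_1+\dots+q_nx_n+q<0$, $0<q_1x_1+\dots+q_nx_n+q$ holds at $\vec r$, and go to the next-approximation step. Next approximation: write $C$ as $C'\cup\{x_{n+1}>a_i\}\cup\{x_{n+1}\ge a_i\}\cup\{x_{n+1}\le b_i\}_{1\le i\le m'}\cup\{x_{n+1}<b_i\}_{m'<i\le m}$ with $C',a_i,b_i$ not involving $x_{n+1}$; choose $j$ with $b_j(\vec r)\le b_i(\vec r)$ for all $i\le m$; replace $D$ by $D\cup C(\vec x,d(\vec x))\cup\{N\}\cup\{b_j\le b_i\mid1\le i\le m\}$ and $d$ by $e(\vec x,b_j(\vec x))$, and repeat the loop. For $\nu x_{n+1}.t'$ the algorithm is the order-dual (start from $d=1$, use the lower bounds $a_i$, choosing $a_j$ maximal at $\vec r$).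 *)

(* Defs.v *)
From Stdlib Require Import Reals Lra List.
Import ListNotations.
Open Scope R_scope.

(** * Lukasiewicz mu-terms (de Bruijn *levels*: [TVar i] is x_(i+1); in a
    context of n free variables, [TMu t] / [TNu t] bind x_(n+1), i.e. level n,
    inside t). *)
Inductive term : Type :=
| TVar : nat -> term
| TZero : term
| TOne : term
| TScale : R -> term -> term
| TJoin : term -> term -> term
| TMeet : term -> term -> term
| TOplus : term -> term -> term
| TOdot : term -> term -> term
| TMu : term -> term
| TNu : term -> term.

Fixpoint wf (n : nat) (t : term) : Prop :=
  match t with
  | TVar i => (i < n)%nat
  | TZero | TOne => True
  | TScale r t1 => 0 <= r <= 1 /\ wf n t1
  | TJoin a b | TMeet a b | TOplus a b | TOdot a b => wf n a /\ wf n b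
  | TMu t1 | TNu t1 => wf (S n) t1
  end.

Fixpoint sem (t : term) (env : list R) (v : R) : Prop :=
  match t with
  | TVar i => v = nth i env 0
  | TZero => v = 0
  | TOne => v = 1
  | TScale r t1 => exists u, sem t1 env u /\ v = r * u
  | TJoin a b => exists u w, sem a env u /\ sem b env w /\ v = Rmax u w
  | TMeet a b => exists u w, sem a env u /\ sem b env w /\ v = Rmin u w
  | TOplus a b => exists u w, sem a env u /\ sem b env w /\ v = Rmin (u + w) 1
  | TOdot a b => exists u w, sem a env u /\ sem b env w /\ v = Rmax (u + w - 1) 0
  | TMu t1 => 0 <= v <= 1 /\ sem t1 (env ++ [v]) v /\
      (forall w, 0 <= w <= 1 -> sem t1 (env ++ [w]) w -> v <= w)
  | TNu t1 => 0 <= v <= 1 /\ sem t1 (env ++ [v]) v /\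
      (forall w, 0 <= w <= 1 -> sem t1 (env ++ [w]) w -> w <= v)
  end.

Record linexp : Type := LE { lcoef : list R; lcst : R }.

Fixpoint dotl (q s : list R) : R :=
  match q, s with
  | a :: q', b :: s' => a * b + dotl q' s'
  | _, _ => 0
  end.

Definition leval (e : linexp) (s : list R) : R := dotl (lcoef e) s + lcst e.

Fixpoint addl (q1 q2 : list R) : list R :=
  match q1, q2 with
  | [], q => q
  | q, [] => q
  | a :: x, b :: y => (a + b) :: addl x y
  end.

Definition ladd (e1 e2 : linexp) : linexp := LE (addl (lcoef e1) (lcoef e2)) (lcst e1 + lcst e2).
Definition lscale (c : R) (e : linexp) : linexp := LE (map (Rmult c) (lcoef e)) (c * lcst e).
Definition lsub (e1 e2 : linexp) : linexp := ladd e1 (lscale (-1) e2).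
Definition lconstant (c : R) : linexp := LE [] c.
Definition lvar (i : nat) : linexp := LE (repeat 0 i ++ [1]) 0.
(** coefficient of x_(i+1) *)
Definition coef (i : nat) (e : linexp) : R := nth i (lcoef e) 0.
Definition ltrunc (n : nat) (e : linexp) : linexp := LE (firstn n (lcoef e)) (lcst e).
(** e(x_1,...,x_n,d) : substitute d for x_(n+1) *)
Definition lsubst (n : nat) (e d : linexp) : linexp :=
  ladd (ltrunc n e) (lscale (coef n e) d).

Inductive constr : Type :=
| CLt : linexp -> linexp -> constr
| CLe : linexp -> linexp -> constr.

Definition cholds (c : constr) (s : list R) : Prop :=
  match c with
  | CLt a b => leval a s < leval b s
  | CLe a b => leval a s <= leval b s
  end.

Definition Choldsl (C : list constr) (s : list R) : Prop := Forall (fun c => cholds c s) C.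

Definition choldsb (c : constr) (s : list R) : bool :=
  match c with
  | CLt a b => if Rlt_dec (leval a s) (leval b s) then true else false
  | CLe a b => if Rle_dec (leval a s) (leval b s) then true else false
  end.

Definition Choldslb (C : list constr) (s : list R) : bool := forallb (fun c => choldsb c s) C.

Definition csubst (n : nat) (d : linexp) (c : constr) : constr :=
  match c with
  | CLt a b => CLt (lsubst n a d) (lsubst n b d)
  | CLe a b => CLe (lsubst n a d) (lsubst n b d)
  end.

Definition cneg (c : constr) : constr :=
  match c with
  | CLt a b => CLe b a
  | CLe a b => CLt b a
  end.

Definition range (n : nat) : list constr :=
  flat_map (fun k => [CLe (lconstant 0) (lvar k); CLe (lvar k) (lconstant 1)]) (seq 0 n).

(** A constraint a <| b is rewritten as g := b - a |> 0 with g = c x_(n+1) + h.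
    If c < 0 it is an upper bound x_(n+1) <| -h/c; if c > 0 a lower bound
    x_(n+1) |> -h/c.  [bound n c] returns -h/c. *)
Definition cgap (c : constr) : linexp :=
  match c with CLt a b | CLe a b => lsub b a end.

Definition bound (n : nat) (c : constr) : linexp :=
  let g := cgap c in lscale (- / coef n g) (ltrunc n g).

Definition upper_bounds (n : nat) (C : list constr) : list linexp :=
  map (bound n) (filter (fun c => if Rlt_dec (coef n (cgap c)) 0 then true else false) C).

Definition lower_bounds (n : nat) (C : list constr) : list linexp :=
  map (bound n) (filter (fun c => if Rlt_dec 0 (coef n (cgap c)) then true else false) C).

Definition result := (list constr * linexp)%type.

(** Choice oracles for the non-deterministic choices of the algorithm. *)
Definition pick_false_spec (pf : list constr -> list R -> constr) : Prop :=
  forall C s, (exists c, In c C /\ ~ cholds c s) -> In (pf C s) C /\ ~ cholds (pf C s) s.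

Definition pick_min_spec (pm : list linexp -> list R -> linexp) : Prop :=
  forall L s, L <> [] -> In (pm L s) L /\ forall b, In b L -> leval (pm L s) s <= leval b s.

Definition pick_max_spec (pm : list linexp -> list R -> linexp) : Prop :=
  forall L s, L <> [] -> In (pm L s) L /\ forall b, In b L -> leval b s <= leval (pm L s) s.

(** * The algorithm, with fuel (None = out of fuel / stuck). *)
Section Alg.
Variable pf : list constr -> list R -> constr.
Variable pmin : list linexp -> list R -> linexp.
Variable pmax : list linexp -> list R -> linexp.

Fixpoint alg (fuel : nat) (n : nat) (t : term) (r : list R) {struct fuel} : option result :=
  match fuel with
  | O => None
  | S k =>
    let bin (a b : term) (f : list constr -> linexp -> list constr -> linexp -> result) :=
      match alg k n a r, alg k n b r with
      | Some (C1, e1), Some (C2, e2) => Some (f C1 e1 C2 e2)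
      | _, _ => None
      end in
    let fixloop (isnu : bool) (t' : term) : option result :=
      (fix loop (j : nat) (D : list constr) (d : linexp) {struct j} : option result :=
        match j with
        | O => None
        | S j' =>
          match alg k (S n) t' (r ++ [leval d r]) with
          | None => None
          | Some (C, e) =>
            let q := coef n e in
            let h := ltrunc n e in
            let next (N : constr) : option result :=
              let bs := if isnu then lower_bounds n C else upper_bounds n C in
              match bs with
              | [] => None
              | _ =>
                let bj := if isnu then pmax bs r else pmin bs r in
                let newc := map (fun b => if isnu then CLe b bj else CLe bj b) bs in
                loop j' (D ++ map (csubst n d) C ++ [N] ++ newc) (lsubst n e bj)
              end in
            if Req_EM_T q 1 then
              if Req_EM_T (leval h r) 0 then
                Some (D ++ map (csubst n d) C ++ [CLe h (lconstant 0); CLe (lconstant 0) h], d)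
              else if Rlt_dec (leval h r) 0 then next (CLt h (lconstant 0))
              else next (CLt (lconstant 0) h)
            else
              let f := lscale (/ (1 - q)) h in
              let rf := r ++ [leval f r] in
              if Choldslb C rf then
                Some (D ++ map (csubst n d) C ++ map (csubst n f) C, f)
              else next (cneg (csubst n f (pf C rf)))
          end
        end) k [] (lconstant (if isnu then 1 else 0)) in
    match t with
    | TVar i => Some (range n, lvar i)
    | TZero => Some (range n, lconstant 0)
    | TOne => Some (range n, lconstant 1)
    | TScale c t1 =>
        match alg k n t1 r with
        | Some (C1, e1) => Some (C1, lscale c e1)
        | None => None
        end
    | TJoin a b => bin a b (fun C1 e1 C2 e2 =>
        if Rle_dec (leval e1 r) (leval e2 r)
        then (C1 ++ C2 ++ [CLe e1 e2], e2)
        else (C1 ++ C2 ++ [CLe e2 e1], e1))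
    | TMeet a b => bin a b (fun C1 e1 C2 e2 =>
        if Rle_dec (leval e1 r) (leval e2 r)
        then (C1 ++ C2 ++ [CLe e1 e2], e1)
        else (C1 ++ C2 ++ [CLe e2 e1], e2))
    | TOplus a b => bin a b (fun C1 e1 C2 e2 =>
        if Rle_dec (leval (ladd e1 e2) r) 1
        then (C1 ++ C2 ++ [CLe (ladd e1 e2) (lconstant 1)], ladd e1 e2)
        else (C1 ++ C2 ++ [CLe (lconstant 1) (ladd e1 e2)], lconstant 1))
    | TOdot a b => bin a b (fun C1 e1 C2 e2 =>
        if Rle_dec 1 (leval (ladd e1 e2) r)
        then (C1 ++ C2 ++ [CLe (lconstant 1) (ladd e1 e2)], lsub (ladd e1 e2) (lconstant 1))
        else (C1 ++ C2 ++ [CLe (ladd e1 e2) (lconstant 1)], lconstant 0))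
    | TMu t1 => fixloop false t1
    | TNu t1 => fixloop true t1
    end
  end.

End Alg.

Definition alg_returns pf pmin pmax (n : nat) (t : term) (r : list R) (res : result) : Prop :=
  exists fuel, alg pf pmin pmax fuel n t r = Some res.

Definition in_cube (n : nat) (r : list R) : Prop :=
  length r = n /\ Forall (fun x => 0 <= x <= 1) r.

Definition represents (n : nat) (F : list result) (t : term) : Prop :=
  (forall r, in_cube n r -> exists Ce, In Ce F /\ Choldsl (fst Ce) r) /\
  (forall Ce r, In Ce F -> in_cube n r -> Choldsl (fst Ce) r -> sem t r (leval (snd Ce) r)).

(* Main.v *)
Require Import Defs.
From Stdlib Require Import Reals List Lra Lia Classical ClassicalEpsilon.
Import ListNotations.
Open Scope R_scope.

Lemma dotl_nil_r q : dotl q [] = 0.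
Proof. destruct q; reflexivity. Qed.

Lemma dotl_addl q1 q2 s : dotl (addl q1 q2) s = dotl q1 s + dotl q2 s.
Proof.
  revert q2 s; induction q1 as [|a q1 IH]; intros q2 s; simpl.
  - lra.
  - destruct q2 as [|b q2]; destruct s as [|c s]; simpl; try lra.
    rewrite IH; ring.
Qed.

Lemma dotl_map q c s : dotl (map (Rmult c) q) s = c * dotl q s.
Proof.
  revert s; induction q as [|a q IH]; intros s; simpl.
  - ring.
  - destruct s; simpl; [ring|]. rewrite IH; ring.
Qed.

Lemma dotl_app_last q s x : dotl q (s ++ [x]) = dotl (firstn (length s) q) s + nth (length s) q 0 * x.
Proof.
  revert q; induction s as [|b s IH]; intros q; simpl.
  - destruct q as [|a q]; simpl; [ring|]. rewrite dotl_nil_r. ring.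
  - destruct q as [|a q]; simpl; [ring|]. rewrite IH. ring.
Qed.

Lemma dotl_firstn q s : dotl (firstn (length s) q) s = dotl q s.
Proof.
  revert q; induction s as [|b s IH]; intros q; simpl.
  - rewrite dotl_nil_r. reflexivity.
  - destruct q; simpl; [reflexivity|]. rewrite IH; reflexivity.
Qed.

Lemma dotl_lvar i s : dotl (repeat 0 i ++ [1]) s = nth i s 0.
Proof.
  revert s; induction i as [|i IH]; intros s; simpl.
  - destruct s; simpl; [reflexivity|]. destruct s; simpl; ring.
  - destruct s; simpl; [reflexivity|]. rewrite IH; ring.
Qed.

Lemma leval_ladd a b s : leval (ladd a b) s = leval a s + leval b s.
Proof. unfold leval, ladd; simpl. rewrite dotl_addl. ring. Qed.
Lemma leval_lscale c a s : leval (lscale c a) s = c * leval a s.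
Proof. unfold leval, lscale; simpl. rewrite dotl_map. ring. Qed.
Lemma leval_lsub a b s : leval (lsub a b) s = leval a s - leval b s.
Proof. unfold lsub. rewrite leval_ladd, leval_lscale. ring. Qed.
Lemma leval_lconstant c s : leval (lconstant c) s = c.
Proof. unfold leval, lconstant; simpl. ring. Qed.
Lemma leval_lvar i s : leval (lvar i) s = nth i s 0.
Proof. unfold leval, lvar; simpl. rewrite dotl_lvar. ring. Qed.

Lemma leval_app n e s x : length s = n ->
  leval e (s ++ [x]) = leval (ltrunc n e) s + coef n e * x.
Proof. intros <-. unfold leval, ltrunc, coef; simpl. rewrite dotl_app_last. ring. Qed.

Lemma leval_ltrunc n e s : length s = n -> leval (ltrunc n e) s = leval e s.
Proof. intros <-. unfold leval, ltrunc; simpl. rewrite dotl_firstn. reflexivity. Qed.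

Lemma leval_lsubst n e d s : length s = n ->
  leval (lsubst n e d) s = leval e (s ++ [leval d s]).
Proof.
  intros Hs. unfold lsubst. rewrite leval_ladd, leval_lscale, (leval_app n e s); auto.
Qed.

Lemma cholds_csubst n d c s : length s = n ->
  (cholds (csubst n d c) s <-> cholds c (s ++ [leval d s])).
Proof.
  intros Hs; destruct c; simpl; rewrite !(leval_lsubst n) by auto; tauto.
Qed.

Lemma Choldsl_app C1 C2 s : Choldsl (C1 ++ C2) s <-> Choldsl C1 s /\ Choldsl C2 s.
Proof. unfold Choldsl. apply Forall_app. Qed.

Lemma Choldsl_csubst n d C s : length s = n ->
  (Choldsl (map (csubst n d) C) s <-> Choldsl C (s ++ [leval d s])).
Proof.
  intros Hs. unfold Choldsl. rewrite Forall_map.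
  split; apply Forall_impl; intros c; apply (cholds_csubst n); auto.
Qed.

Lemma Choldsl_In C s c : Choldsl C s -> In c C -> cholds c s.
Proof. unfold Choldsl; rewrite Forall_forall; auto. Qed.

Lemma choldsb_spec c s : choldsb c s = true <-> cholds c s.
Proof.
  destruct c; simpl; [destruct Rlt_dec|destruct Rle_dec]; split; intro; auto; discriminate.
Qed.

Lemma Choldslb_spec C s : Choldslb C s = true <-> Choldsl C s.
Proof.
  unfold Choldslb, Choldsl. rewrite forallb_forall, Forall_forall.
  split; intros H c Hc; apply choldsb_spec; auto.
Qed.

Lemma Choldslb_false C s : Choldslb C s = false -> exists c, In c C /\ ~ cholds c s.
Proof.
  intros H. apply NNPP; intros Hn.
  assert (Choldsl C s).
  { unfold Choldsl; rewrite Forall_forall; intros c Hc. apply NNPP; intro; apply Hn; eauto. }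
  apply Choldslb_spec in H0. congruence.
Qed.

Definition gconst n c s := leval (ltrunc n (cgap c)) s.
Definition gcoef n c := coef n (cgap c).

Lemma gap_app n c s x : length s = n ->
  (cholds c (s ++ [x]) <->
   match c with CLt _ _ => 0 < gconst n c s + gcoef n c * x
   | CLe _ _ => 0 <= gconst n c s + gcoef n c * x end).
Proof.
  intros Hs. unfold gconst, gcoef. rewrite <- (leval_app n) by auto.
  destruct c as [a b|a b]; simpl; rewrite leval_lsub; split; intro; lra.
Qed.

Lemma bound_eval n c s : leval (Defs.bound n c) s = - / gcoef n c * gconst n c s.
Proof. unfold Defs.bound. rewrite leval_lscale. reflexivity. Qed.

Lemma c_ext n c s d x : length s = n -> cholds c (s ++ [d]) -> d <= x ->
  (gcoef n c < 0 -> x < leval (Defs.bound n c) s) -> cholds c (s ++ [x]).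
Proof.
  intros Hs H Hdx Hb. rewrite (gap_app n) in * by auto. rewrite bound_eval in Hb.
  set (g := gcoef n c) in *. set (G := gconst n c s) in *.
  destruct (Rlt_dec g 0) as [Hg|Hg].
  - specialize (Hb Hg).
    assert (E : g * (- / g * G) = - G) by (field; lra).
    assert (- G < g * x) by (rewrite <- E; apply Rmult_lt_gt_compat_neg_l; lra).
    destruct c; simpl in *; lra.
  - assert (g * d <= g * x) by (apply Rmult_le_compat_l; lra).
    destruct c; simpl in *; lra.
Qed.

Lemma c_convex n c s a b x : length s = n -> cholds c (s ++ [a]) -> cholds c (s ++ [b]) ->
  a <= x <= b -> cholds c (s ++ [x]).
Proof.
  intros Hs Ha Hb Hx. rewrite (gap_app n) in * by auto.
  set (g := gcoef n c) in *. set (G := gconst n c s) in *.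
  destruct (Rle_dec 0 g).
  - assert (g * a <= g * x) by (apply Rmult_le_compat_l; lra). destruct c; simpl in *; lra.
  - assert (g * b <= g * x) by (apply Rmult_le_compat_neg_l; lra). destruct c; simpl in *; lra.
Qed.

Lemma c_upper n c s x : length s = n -> gcoef n c < 0 -> cholds c (s ++ [x]) ->
  x <= leval (Defs.bound n c) s /\ (forall a b, c = CLt a b -> x < leval (Defs.bound n c) s).
Proof.
  intros Hs Hg H. rewrite (gap_app n) in H by auto. rewrite bound_eval.
  set (g := gcoef n c) in *. set (G := gconst n c s) in *.
  assert (E : g * (- / g * G) = - G) by (field; lra).
  split.
  - destruct (Rle_dec x (- / g * G)); auto.
    assert (g * x < g * (- / g * G)) by (apply Rmult_lt_gt_compat_neg_l; lra).
    destruct c; simpl in *; lra.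
  - intros a b ->. destruct (Rlt_dec x (- / g * G)); auto.
    assert (g * x <= g * (- / g * G)) by (apply Rmult_le_compat_neg_l; lra). lra.
Qed.

Lemma c_lower n c s x : length s = n -> 0 < gcoef n c -> cholds c (s ++ [x]) ->
  leval (Defs.bound n c) s <= x /\ (forall a b, c = CLt a b -> leval (Defs.bound n c) s < x).
Proof.
  intros Hs Hg H. rewrite (gap_app n) in H by auto. rewrite bound_eval.
  set (g := gcoef n c) in *. set (G := gconst n c s) in *.
  assert (E : g * (- / g * G) = - G) by (field; lra).
  split.
  - destruct (Rle_dec (- / g * G) x); auto.
    assert (g * x < g * (- / g * G)) by (apply Rmult_lt_compat_l; lra).
    destruct c; simpl in *; lra.
  - intros a b ->. destruct (Rlt_dec (- / g * G) x); auto.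
    assert (g * x <= g * (- / g * G)) by (apply Rmult_le_compat_l; lra). lra.
Qed.

Lemma c_ext_down n c s d x : length s = n -> cholds c (s ++ [d]) -> x <= d ->
  (0 < gcoef n c -> leval (Defs.bound n c) s < x) -> cholds c (s ++ [x]).
Proof.
  intros Hs H Hdx Hb. rewrite (gap_app n) in * by auto. rewrite bound_eval in Hb.
  set (g := gcoef n c) in *. set (G := gconst n c s) in *.
  destruct (Rlt_dec 0 g) as [Hg|Hg].
  - specialize (Hb Hg).
    assert (E : g * (- / g * G) = - G) by (field; lra).
    assert (- G < g * x) by (rewrite <- E; apply Rmult_lt_compat_l; lra).
    destruct c; simpl in *; lra.
  - assert (g * d <= g * x) by (apply Rmult_le_compat_neg_l; lra).
    destruct c; simpl in *; lra.
Qed.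

Lemma in_cube_app n s x : in_cube (S n) (s ++ [x]) <-> in_cube n s /\ 0 <= x <= 1.
Proof.
  unfold in_cube. rewrite length_app, Forall_app. simpl.
  split.
  - intros [Hl [H1 H2]]. inversion H2; subst. split; [split|]; auto; lia.
  - intros [[Hl H1] H2]. split; [lia|split; auto].
Qed.

Lemma Choldsl_range n s : length s = n -> (Choldsl (range n) s <-> in_cube n s).
Proof.
  intros Hs. unfold Choldsl, range, in_cube. rewrite Forall_flat_map, Forall_nth.
  split.
  - intros H. split; auto. apply Forall_nth. intros i d Hi.
    rewrite nth_indep with (d' := 0) by auto.
    specialize (H i 0%nat). rewrite length_seq in H. specialize (H ltac:(lia)).
    rewrite seq_nth in H by lia. simpl in H.
    inversion H; subst. inversion H3; subst. simpl in *.
    rewrite leval_lconstant, leval_lvar in *. lra.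
  - intros [_ H] i d Hi. rewrite length_seq in Hi. rewrite seq_nth by lia. simpl.
    rewrite Forall_nth in H. specialize (H i 0 ltac:(lia)).
    constructor; [|constructor; [|constructor]]; simpl; rewrite ?leval_lconstant, ?leval_lvar; lra.
Qed.
Lemma cube_app n s x : in_cube n s -> 0 <= x <= 1 -> in_cube (S n) (s ++ [x]).
Proof. intros; apply in_cube_app; auto. Qed.

Lemma sem_det t env u u' : sem t env u -> sem t env u' -> u = u'.
Proof.
  revert env u u'; induction t; intros env u u' H1 H2; simpl in *.
  - congruence.
  - congruence.
  - congruence.
  - destruct H1 as [a [Ha ->]]; destruct H2 as [b [Hb ->]].
    rewrite (IHt _ _ _ Ha Hb); reflexivity.
  - destruct H1 as [a [b [Ha [Hb ->]]]]; destruct H2 as [a' [b' [Ha' [Hb' ->]]]].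
    rewrite (IHt1 _ _ _ Ha Ha'), (IHt2 _ _ _ Hb Hb'); reflexivity.
  - destruct H1 as [a [b [Ha [Hb ->]]]]; destruct H2 as [a' [b' [Ha' [Hb' ->]]]].
    rewrite (IHt1 _ _ _ Ha Ha'), (IHt2 _ _ _ Hb Hb'); reflexivity.
  - destruct H1 as [a [b [Ha [Hb ->]]]]; destruct H2 as [a' [b' [Ha' [Hb' ->]]]].
    rewrite (IHt1 _ _ _ Ha Ha'), (IHt2 _ _ _ Hb Hb'); reflexivity.
  - destruct H1 as [a [b [Ha [Hb ->]]]]; destruct H2 as [a' [b' [Ha' [Hb' ->]]]].
    rewrite (IHt1 _ _ _ Ha Ha'), (IHt2 _ _ _ Hb Hb'); reflexivity.
  - destruct H1 as [R1 [F1 L1]]; destruct H2 as [R2 [F2 L2]].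
    specialize (L1 u' R2 F2); specialize (L2 u R1 F1); lra.
  - destruct H1 as [R1 [F1 L1]]; destruct H2 as [R2 [F2 L2]].
    specialize (L1 u' R2 F2); specialize (L2 u R1 F1); lra.
Qed.

Lemma tarski_lfp (G : R -> R -> Prop) :
  (forall x, 0 <= x <= 1 -> exists y, G x y) ->
  (forall x y, 0 <= x <= 1 -> G x y -> 0 <= y <= 1) ->
  (forall x x' y y', 0 <= x <= 1 -> 0 <= x' <= 1 -> x <= x' -> G x y -> G x' y' -> y <= y') ->
  exists v, 0 <= v <= 1 /\ G v v /\ (forall p y, 0 <= p <= 1 -> G p y -> y <= p -> v <= p).
Proof.
  intros Tot Rng Mon.
  set (P := fun x => 0 <= x <= 1 /\ exists y, G x y /\ y <= x).
  set (E := fun z => exists x, P x /\ z = - x).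
  assert (HP1 : P 1).
  { destruct (Tot 1) as [y Hy]; [lra|]. split; [lra|]. exists y; split; auto.
    apply (Rng 1) in Hy; lra. }
  destruct (completeness E) as [m [Hub Hlub]].
  { exists 0. intros z [x [[Hx _] ->]]. lra. }
  { exists (-1). exists 1; split; auto. }
  set (v := - m).
  assert (Hlow : forall x, P x -> v <= x).
  { intros x Hx. assert (E (-x)) by (exists x; auto). apply Hub in H. unfold v; lra. }
  assert (Hgl : forall l, (forall x, P x -> l <= x) -> l <= v).
  { intros l Hl. assert (m <= - l).
    { apply Hlub. intros z [x [Hx ->]]. apply Hl in Hx. lra. }
    unfold v; lra. }
  assert (Hv1 : v <= 1) by (apply Hlow; auto).
  assert (Hv0 : 0 <= v) by (apply Hgl; intros x [Hx _]; lra).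
  destruct (Tot v) as [y0 Hy0]; [lra|].
  assert (Hy0r := Rng v y0 ltac:(lra) Hy0).
  assert (y0 <= v).
  { apply Hgl. intros x Hx. pose proof (Hlow x Hx) as Hvx.
    destruct Hx as [Hx [y [Hy Hyx]]].
    pose proof (Mon v x y0 y ltac:(lra) Hx Hvx Hy0 Hy). lra. }
  assert (v <= y0).
  { apply Hlow. split; auto. destruct (Tot y0) as [y1 Hy1]; auto.
    exists y1; split; auto. apply (Mon y0 v y1 y0); auto; lra. }
  assert (y0 = v) by lra. subst y0.
  exists v; split; [lra|split; auto].
  intros p y Hp Hy Hyp. apply Hlow. split; auto. exists y; auto.
Qed.

Lemma tarski_gfp (G : R -> R -> Prop) :
  (forall x, 0 <= x <= 1 -> exists y, G x y) ->
  (forall x y, 0 <= x <= 1 -> G x y -> 0 <= y <= 1) ->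
  (forall x x' y y', 0 <= x <= 1 -> 0 <= x' <= 1 -> x <= x' -> G x y -> G x' y' -> y <= y') ->
  exists v, 0 <= v <= 1 /\ G v v /\ (forall p y, 0 <= p <= 1 -> G p y -> p <= y -> p <= v).
Proof.
  intros Tot Rng Mon.
  set (P := fun x => 0 <= x <= 1 /\ exists y, G x y /\ x <= y).
  assert (HP0 : P 0).
  { destruct (Tot 0) as [y Hy]; [lra|]. split; [lra|]. exists y; split; auto.
    apply (Rng 0) in Hy; lra. }
  destruct (completeness P) as [v [Hub Hlub]].
  { exists 1. intros z [Hz _]. lra. }
  { exists 0. auto. }
  assert (Hup : forall x, P x -> x <= v) by (intros; apply Hub; auto).
  assert (Hlu : forall l, (forall x, P x -> x <= l) -> v <= l) by (intros; apply Hlub; auto).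
  assert (Hv1 : v <= 1) by (apply Hlu; intros x [Hx _]; lra).
  assert (Hv0 : 0 <= v) by (apply Hup; auto).
  destruct (Tot v) as [y0 Hy0]; [lra|].
  assert (Hy0r := Rng v y0 ltac:(lra) Hy0).
  assert (v <= y0).
  { apply Hlu. intros x Hx. pose proof (Hup x Hx) as Hvx.
    destruct Hx as [Hx [y [Hy Hyx]]].
    pose proof (Mon x v y y0 Hx ltac:(lra) Hvx Hy Hy0). lra. }
  assert (y0 <= v).
  { apply Hup. split; auto. destruct (Tot y0) as [y1 Hy1]; auto.
    exists y1; split; auto. apply (Mon v y0 y0 y1); auto; lra. }
  assert (y0 = v) by lra. subst y0.
  exists v; split; [lra|split; auto].
  intros p y Hp Hy Hyp. apply Hup. split; auto. exists y; auto.
Qed.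

Lemma Forall2_nth (e1 e2 : list R) : Forall2 Rle e1 e2 -> forall i, nth i e1 0 <= nth i e2 0.
Proof.
  induction 1; intros i; destruct i; simpl; auto; lra.
Qed.

Lemma Forall2_app_last (e1 e2 : list R) x y : Forall2 Rle e1 e2 -> x <= y ->
  Forall2 Rle (e1 ++ [x]) (e2 ++ [y]).
Proof. intros; apply Forall2_app; auto. Qed.

Lemma Forall2_refl (e : list R) : Forall2 Rle e e.
Proof. induction e; constructor; auto; lra. Qed.

Definition semfacts n t :=
  (forall env v, in_cube n env -> sem t env v -> 0 <= v <= 1) /\
  (forall env, in_cube n env -> exists v, sem t env v) /\
  (forall e1 e2 v1 v2, in_cube n e1 -> in_cube n e2 -> Forall2 Rle e1 e2 ->
     sem t e1 v1 -> sem t e2 v2 -> v1 <= v2).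

Lemma mu_lfp n t1 env : semfacts (S n) t1 -> in_cube n env ->
  exists v, sem (TMu t1) env v /\
    (forall p y, 0 <= p <= 1 -> sem t1 (env ++ [p]) y -> y <= p -> v <= p).
Proof.
  intros [Rg [Tt Mn]] He.
  destruct (tarski_lfp (fun x y => sem t1 (env ++ [x]) y)) as [v [Hv [Hf Hp]]].
  - intros x Hx. apply Tt. apply cube_app; auto.
  - intros x y Hx Hy. apply (Rg _ _ (cube_app _ _ _ He Hx) Hy).
  - intros x x' y y' Hx Hx' Hxx Hy Hy'.
    apply (Mn _ _ _ _ (cube_app _ _ _ He Hx) (cube_app _ _ _ He Hx')
            (Forall2_app_last _ _ _ _ (Forall2_refl env) Hxx) Hy Hy').
  - exists v; split; auto. simpl. split; auto. split; auto.
    intros w Hw Hfw. apply (Hp w w); auto; lra.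
Qed.

Lemma nu_gfp n t1 env : semfacts (S n) t1 -> in_cube n env ->
  exists v, sem (TNu t1) env v /\
    (forall p y, 0 <= p <= 1 -> sem t1 (env ++ [p]) y -> p <= y -> p <= v).
Proof.
  intros [Rg [Tt Mn]] He.
  destruct (tarski_gfp (fun x y => sem t1 (env ++ [x]) y)) as [v [Hv [Hf Hp]]].
  - intros x Hx. apply Tt. apply cube_app; auto.
  - intros x y Hx Hy. apply (Rg _ _ (cube_app _ _ _ He Hx) Hy).
  - intros x x' y y' Hx Hx' Hxx Hy Hy'.
    apply (Mn _ _ _ _ (cube_app _ _ _ He Hx) (cube_app _ _ _ He Hx')
            (Forall2_app_last _ _ _ _ (Forall2_refl env) Hxx) Hy Hy').
  - exists v; split; auto. simpl. split; auto. split; auto.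
    intros w Hw Hfw. apply (Hp w w); auto; lra.
Qed.

Lemma Rmax_le a b c d : a <= c -> b <= d -> Rmax a b <= Rmax c d.
Proof. unfold Rmax; repeat destruct Rle_dec; lra. Qed.
Lemma Rmin_le a b c d : a <= c -> b <= d -> Rmin a b <= Rmin c d.
Proof. unfold Rmin; repeat destruct Rle_dec; lra. Qed.

Lemma sem_all t : forall n, wf n t -> semfacts n t.
Proof.
  induction t; intros m Hw; simpl in Hw; unfold semfacts; simpl.
  - split; [|split].
    + intros env v [Hl Hf] ->. rewrite Forall_nth in Hf. apply Hf. lia.
    + intros env _. eauto.
    + intros e1 e2 v1 v2 _ _ H -> ->. apply Forall2_nth; auto.
  - split; [|split]; [intros; lra | eauto | intros; lra].
  - split; [|split]; [intros; lra | eauto | intros; lra].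
  - destruct Hw as [Hr Hw]. destruct (IHt m Hw) as [Rg [Tt Mn]].
    split; [|split].
    + intros env v He [u [Hu ->]]. apply Rg in Hu; auto. nra.
    + intros env He. destruct (Tt env He) as [u Hu]. eauto.
    + intros e1 e2 v1 v2 H1 H2 H12 [u1 [Hu1 ->]] [u2 [Hu2 ->]].
      pose proof (Mn _ _ _ _ H1 H2 H12 Hu1 Hu2). nra.
  - destruct Hw as [Hw1 Hw2]. destruct (IHt1 m Hw1) as [Rg1 [Tt1 Mn1]].
    destruct (IHt2 m Hw2) as [Rg2 [Tt2 Mn2]]. split; [|split].
    + intros env v He [a [b [Ha [Hb ->]]]]. apply Rg1 in Ha; apply Rg2 in Hb; auto.
      unfold Rmax; destruct Rle_dec; lra.
    + intros env He. destruct (Tt1 env He) as [a Ha]; destruct (Tt2 env He) as [b Hb]. eauto 7.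
    + intros e1 e2 v1 v2 H1 H2 H12 [a [b [Ha [Hb ->]]]] [a' [b' [Ha' [Hb' ->]]]].
      apply Rmax_le; eauto.
  - destruct Hw as [Hw1 Hw2]. destruct (IHt1 m Hw1) as [Rg1 [Tt1 Mn1]].
    destruct (IHt2 m Hw2) as [Rg2 [Tt2 Mn2]]. split; [|split].
    + intros env v He [a [b [Ha [Hb ->]]]]. apply Rg1 in Ha; apply Rg2 in Hb; auto.
      unfold Rmin; destruct Rle_dec; lra.
    + intros env He. destruct (Tt1 env He) as [a Ha]; destruct (Tt2 env He) as [b Hb]. eauto 7.
    + intros e1 e2 v1 v2 H1 H2 H12 [a [b [Ha [Hb ->]]]] [a' [b' [Ha' [Hb' ->]]]].
      apply Rmin_le; eauto.
  - destruct Hw as [Hw1 Hw2]. destruct (IHt1 m Hw1) as [Rg1 [Tt1 Mn1]].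
    destruct (IHt2 m Hw2) as [Rg2 [Tt2 Mn2]]. split; [|split].
    + intros env v He [a [b [Ha [Hb ->]]]]. apply Rg1 in Ha; apply Rg2 in Hb; auto.
      unfold Rmin; destruct Rle_dec; lra.
    + intros env He. destruct (Tt1 env He) as [a Ha]; destruct (Tt2 env He) as [b Hb]. eauto 7.
    + intros e1 e2 v1 v2 H1 H2 H12 [a [b [Ha [Hb ->]]]] [a' [b' [Ha' [Hb' ->]]]].
      apply Rmin_le; [|lra]. pose proof (Mn1 _ _ _ _ H1 H2 H12 Ha Ha').
      pose proof (Mn2 _ _ _ _ H1 H2 H12 Hb Hb'). lra.
  - destruct Hw as [Hw1 Hw2]. destruct (IHt1 m Hw1) as [Rg1 [Tt1 Mn1]].
    destruct (IHt2 m Hw2) as [Rg2 [Tt2 Mn2]]. split; [|split].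
    + intros env v He [a [b [Ha [Hb ->]]]]. apply Rg1 in Ha; apply Rg2 in Hb; auto.
      unfold Rmax; destruct Rle_dec; lra.
    + intros env He. destruct (Tt1 env He) as [a Ha]; destruct (Tt2 env He) as [b Hb]. eauto 7.
    + intros e1 e2 v1 v2 H1 H2 H12 [a [b [Ha [Hb ->]]]] [a' [b' [Ha' [Hb' ->]]]].
      apply Rmax_le; [|lra]. pose proof (Mn1 _ _ _ _ H1 H2 H12 Ha Ha').
      pose proof (Mn2 _ _ _ _ H1 H2 H12 Hb Hb'). lra.
  - pose proof (IHt (S m) Hw) as SF. split; [|split].
    + intros env v _ [Hv _]; auto.
    + intros env He. destruct (mu_lfp m t env SF He) as [v [Hv _]]. eauto.
    + intros e1 e2 v1 v2 H1 H2 H12 Hv1 Hv2.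
      destruct (mu_lfp m t e1 SF H1) as [v0 [Hv0 Hp]].
      rewrite (sem_det (TMu t) e1 _ _ Hv1 Hv0).
      destruct SF as [Rg [Tt Mn]]. destruct Hv2 as [R2 [F2 _]].
      destruct (Tt (e1 ++ [v2])) as [y Hy]; [apply cube_app; auto|].
      apply (Hp v2 y); auto.
      apply (Mn _ _ _ _ (cube_app _ _ _ H1 R2) (cube_app _ _ _ H2 R2)
              (Forall2_app_last _ _ _ _ H12 (Rle_refl v2)) Hy F2).
  - pose proof (IHt (S m) Hw) as SF. split; [|split].
    + intros env v _ [Hv _]; auto.
    + intros env He. destruct (nu_gfp m t env SF He) as [v [Hv _]]. eauto.
    + intros e1 e2 v1 v2 H1 H2 H12 Hv1 Hv2.
      destruct (nu_gfp m t e2 SF H2) as [v0 [Hv0 Hp]].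
      rewrite (sem_det (TNu t) e2 _ _ Hv2 Hv0).
      destruct SF as [Rg [Tt Mn]]. destruct Hv1 as [R1 [F1 _]].
      destruct (Tt (e2 ++ [v1])) as [y Hy]; [apply cube_app; auto|].
      apply (Hp v1 y); auto.
      apply (Mn _ _ _ _ (cube_app _ _ _ H1 R1) (cube_app _ _ _ H2 R1)
              (Forall2_app_last _ _ _ _ H12 (Rle_refl v1)) F1 Hy).
Qed.

Lemma mu_prefixed n t1 env v p y : wf (S n) t1 -> in_cube n env -> sem (TMu t1) env v ->
  0 <= p <= 1 -> sem t1 (env ++ [p]) y -> y <= p -> v <= p.
Proof.
  intros Hw He Hv Hp Hy Hyp.
  destruct (mu_lfp n t1 env (sem_all t1 _ Hw) He) as [v0 [Hv0 H]].
  rewrite (sem_det _ _ _ _ Hv Hv0). eauto.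
Qed.

Lemma nu_postfixed n t1 env v p y : wf (S n) t1 -> in_cube n env -> sem (TNu t1) env v ->
  0 <= p <= 1 -> sem t1 (env ++ [p]) y -> p <= y -> p <= v.
Proof.
  intros Hw He Hv Hp Hy Hyp.
  destruct (nu_gfp n t1 env (sem_all t1 _ Hw) He) as [v0 [Hv0 H]].
  rewrite (sem_det _ _ _ _ Hv Hv0). eauto.
Qed.
Section Loop.
Variable pf : list constr -> list R -> constr.
Variable pmin : list linexp -> list R -> linexp.
Variable pmax : list linexp -> list R -> linexp.

Definition mbody (rec : list constr -> linexp -> option result)
  (A : list R -> option result) (n : nat) (r : list R) (isnu : bool)
  (D : list constr) (d : linexp) : option result :=
          match A (r ++ [leval d r]) with
          | None => None
          | Some (C, e) =>
            let q := coef n e in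
            let h := ltrunc n e in
            let next (N : constr) : option result :=
              let bs := if isnu then lower_bounds n C else upper_bounds n C in
              match bs with
              | [] => None
              | _ =>
                let bj := if isnu then pmax bs r else pmin bs r in
                let newc := map (fun b => if isnu then CLe b bj else CLe bj b) bs in
                rec (D ++ map (csubst n d) C ++ [N] ++ newc) (lsubst n e bj)
              end in
            if Req_EM_T q 1 then
              if Req_EM_T (leval h r) 0 then
                Some (D ++ map (csubst n d) C ++ [CLe h (lconstant 0); CLe (lconstant 0) h], d)
              else if Rlt_dec (leval h r) 0 then next (CLt h (lconstant 0))
              else next (CLt (lconstant 0) h)
            else
              let f := lscale (/ (1 - q)) h in
              let rf := r ++ [leval f r] in
              if Choldslb C rf then
                Some (D ++ map (csubst n d) C ++ map (csubst n f) C, f)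
              else next (cneg (csubst n f (pf C rf)))
          end.

Section L2.
Variable A : list R -> option result.
Variable n : nat.
Variable r : list R.
Variable isnu : bool.
Fixpoint mloop (j : nat) (D : list constr) (d : linexp) {struct j} : option result :=
  match j with
  | O => None
  | S j' => mbody (mloop j') A n r isnu D d
  end.
End L2.

Lemma alg_mu k n t r :
  alg pf pmin pmax (S k) n (TMu t) r =
  mloop (alg pf pmin pmax k (S n) t) n r false k [] (lconstant 0).
Proof. reflexivity. Qed.

Lemma alg_nu k n t r :
  alg pf pmin pmax (S k) n (TNu t) r =
  mloop (alg pf pmin pmax k (S n) t) n r true k [] (lconstant 1).
Proof. reflexivity. Qed.

Definition bnds (isnu : bool) (n : nat) (C : list constr) : list linexp := if isnu then lower_bounds n C else upper_bounds n C.
Definition fval n e := lscale (/ (1 - coef n e)) (ltrunc n e).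

Definition NCond n r C e N :=
  (coef n e = 1 /\ ((leval (ltrunc n e) r < 0 /\ N = CLt (ltrunc n e) (lconstant 0)) \/
                    (0 < leval (ltrunc n e) r /\ N = CLt (lconstant 0) (ltrunc n e)))) \/
  (coef n e <> 1 /\ ~ Choldsl C (r ++ [leval (fval n e) r]) /\
     N = cneg (csubst n (fval n e) (pf C (r ++ [leval (fval n e) r])))).

Definition DirectRes n r C e D d (res : result) :=
  (coef n e = 1 /\ leval (ltrunc n e) r = 0 /\
     res = (D ++ map (csubst n d) C ++ [CLe (ltrunc n e) (lconstant 0); CLe (lconstant 0) (ltrunc n e)], d)) \/
  (coef n e <> 1 /\ Choldsl C (r ++ [leval (fval n e) r]) /\
     res = (D ++ map (csubst n d) C ++ map (csubst n (fval n e)) C, fval n e)).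

Definition pick (isnu : bool) (bs : list linexp) (r : list R) : linexp := if isnu then pmax bs r else pmin bs r.
Definition newcs (isnu : bool) (bs : list linexp) (bj : linexp) : list constr := map (fun b => if isnu then CLe b bj else CLe bj b) bs.

Lemma mbody_none rec A n r isnu D d :
  A (r ++ [leval d r]) = None -> mbody rec A n r isnu D d = None.
Proof. intros H; unfold mbody; rewrite H; reflexivity. Qed.

Lemma mbody_cases rec A n r isnu D d C e :
  A (r ++ [leval d r]) = Some (C, e) -> bnds isnu n C <> [] ->
  (exists res, mbody rec A n r isnu D d = Some res /\ DirectRes n r C e D d res) \/
  (exists N, NCond n r C e N /\
     mbody rec A n r isnu D d =
     rec (D ++ map (csubst n d) C ++ [N] ++ newcs isnu (bnds isnu n C) (pick isnu (bnds isnu n C) r))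
         (lsubst n e (pick isnu (bnds isnu n C) r))).
Proof.
  intros HA Hb. unfold mbody. rewrite HA. cbv zeta.
  unfold bnds, pick, newcs, NCond, DirectRes, fval in *.
  destruct (if isnu then lower_bounds n C else upper_bounds n C) as [|b0 bs] eqn:EB;
    [congruence|].
  destruct (Req_EM_T (coef n e) 1) as [Hq|Hq].
  - destruct (Req_EM_T (leval (ltrunc n e) r) 0) as [Hh|Hh].
    + left. eexists; split; [reflexivity|]. left; auto.
    + destruct (Rlt_dec (leval (ltrunc n e) r) 0) as [Hl|Hl].
      * right. eexists; split; [left; split; [auto|left; split; [auto|reflexivity]]|].
        reflexivity.
      * right. eexists; split; [left; split; [auto|right; split; [lra|reflexivity]]|].
        reflexivity.
  - destruct (Choldslb C (r ++ [leval (lscale (/ (1 - coef n e)) (ltrunc n e)) r])) eqn:EC.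
    + left. eexists; split; [reflexivity|]. right. split; auto. split; auto.
      apply Choldslb_spec; auto.
    + right. eexists; split; [right; split; [auto|split; [|reflexivity]]|reflexivity].
      intros HH. apply Choldslb_spec in HH. congruence.
Qed.

Lemma mbody_mono rec1 rec2 (A1 A2 : list R -> option result) n r isnu D d res :
  (forall D d res, rec1 D d = Some res -> rec2 D d = Some res) ->
  (forall x res, A1 x = Some res -> A2 x = Some res) ->
  mbody rec1 A1 n r isnu D d = Some res -> mbody rec2 A2 n r isnu D d = Some res.
Proof.
  intros Hr HA H. destruct (A1 (r ++ [leval d r])) as [[C e]|] eqn:E.
  - pose proof (HA _ _ E) as E2.
    destruct (list_eq_dec (fun a b => ltac:(apply (excluded_middle_informative (a = b)))) (bnds isnu n C) []) as [Hb|Hb].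
    + unfold mbody in *. rewrite E in H. rewrite E2. unfold bnds in Hb. cbv zeta in *.
      rewrite Hb in *.
      destruct Req_EM_T; [destruct Req_EM_T; [auto|destruct Rlt_dec; discriminate]|].
      destruct Choldslb; [auto|discriminate].
    + destruct (mbody_cases rec1 A1 n r isnu D d C e E Hb) as [[res' [H1 H2]]|[N [H1 H2]]];
      destruct (mbody_cases rec2 A2 n r isnu D d C e E2 Hb) as [[res'' [H3 H4]]|[N' [H3 H4]]].
      * rewrite H1 in H. injection H as ->. rewrite H3 in *. unfold DirectRes in *. intuition (try lra; try congruence).
      * exfalso. unfold NCond, DirectRes in *. intuition (try lra; try congruence).
      * exfalso. unfold NCond, DirectRes in *. intuition (try lra; try congruence).
      * rewrite H4. rewrite H2 in H. apply Hr.
        assert (N = N') by (unfold NCond in *; intuition (try lra; try congruence)).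
        subst; auto.
  - rewrite mbody_none in H by auto. discriminate.
Qed.

Lemma mloop_mono (A1 A2 : list R -> option result) n r isnu :
  (forall x res, A1 x = Some res -> A2 x = Some res) ->
  forall j D d res, mloop A1 n r isnu j D d = Some res -> mloop A2 n r isnu (S j) D d = Some res.
Proof.
  intros HA j; induction j as [|j IH]; intros D d res H; [discriminate|].
  simpl in H |- *. eapply mbody_mono; [| exact HA | exact H].
  intros; apply IH; auto.
Qed.

Lemma alg_scale k n c t r : alg pf pmin pmax (S k) n (TScale c t) r =
  match alg pf pmin pmax k n t r with Some (C1, e1) => Some (C1, lscale c e1) | None => None end.
Proof. reflexivity. Qed.

Definition bin2 k n a b r (f : list constr -> linexp -> list constr -> linexp -> result) :=
  match alg pf pmin pmax k n a r, alg pf pmin pmax k n b r with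
  | Some (C1, e1), Some (C2, e2) => Some (f C1 e1 C2 e2)
  | _, _ => None
  end.

Definition fjoin r C1 e1 C2 e2 : result :=
        if Rle_dec (leval e1 r) (leval e2 r)
        then (C1 ++ C2 ++ [CLe e1 e2], e2)
        else (C1 ++ C2 ++ [CLe e2 e1], e1).
Definition fmeet r C1 e1 C2 e2 : result :=
        if Rle_dec (leval e1 r) (leval e2 r)
        then (C1 ++ C2 ++ [CLe e1 e2], e1)
        else (C1 ++ C2 ++ [CLe e2 e1], e2).
Definition foplus r C1 e1 C2 e2 : result :=
        if Rle_dec (leval (ladd e1 e2) r) 1
        then (C1 ++ C2 ++ [CLe (ladd e1 e2) (lconstant 1)], ladd e1 e2)
        else (C1 ++ C2 ++ [CLe (lconstant 1) (ladd e1 e2)], lconstant 1).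
Definition fodot r C1 e1 C2 e2 : result :=
        if Rle_dec 1 (leval (ladd e1 e2) r)
        then (C1 ++ C2 ++ [CLe (lconstant 1) (ladd e1 e2)], lsub (ladd e1 e2) (lconstant 1))
        else (C1 ++ C2 ++ [CLe (ladd e1 e2) (lconstant 1)], lconstant 0).

Lemma alg_join k n a b r : alg pf pmin pmax (S k) n (TJoin a b) r = bin2 k n a b r (fjoin r).
Proof. reflexivity. Qed.
Lemma alg_meet k n a b r : alg pf pmin pmax (S k) n (TMeet a b) r = bin2 k n a b r (fmeet r).
Proof. reflexivity. Qed.
Lemma alg_oplus k n a b r : alg pf pmin pmax (S k) n (TOplus a b) r = bin2 k n a b r (foplus r).
Proof. reflexivity. Qed.
Lemma alg_odot k n a b r : alg pf pmin pmax (S k) n (TOdot a b) r = bin2 k n a b r (fodot r).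
Proof. reflexivity. Qed.

Lemma bin2_mono k n a b r f res :
  (forall n t r res, alg pf pmin pmax k n t r = Some res -> alg pf pmin pmax (S k) n t r = Some res) ->
  bin2 k n a b r f = Some res -> bin2 (S k) n a b r f = Some res.
Proof.
  intros IH H. unfold bin2 in *.
  destruct (alg pf pmin pmax k n a r) as [[C1 e1]|] eqn:E1; [|discriminate].
  destruct (alg pf pmin pmax k n b r) as [[C2 e2]|] eqn:E2; [|discriminate].
  rewrite (IH _ _ _ _ E1), (IH _ _ _ _ E2). exact H.
Qed.

Lemma alg_mono fuel : forall n t r res,
  alg pf pmin pmax fuel n t r = Some res -> alg pf pmin pmax (S fuel) n t r = Some res.
Proof.
  induction fuel as [|k IH]; intros n t r res H; [discriminate|].
  destruct t.
  - exact H.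
  - exact H.
  - exact H.
  - rewrite alg_scale in H |- *. destruct (alg pf pmin pmax k n t r) as [[C1 e1]|] eqn:E; [|discriminate].
    rewrite (IH _ _ _ _ E). exact H.
  - rewrite alg_join in H |- *. apply bin2_mono; auto.
  - rewrite alg_meet in H |- *. apply bin2_mono; auto.
  - rewrite alg_oplus in H |- *. apply bin2_mono; auto.
  - rewrite alg_odot in H |- *. apply bin2_mono; auto.
  - rewrite alg_mu in H |- *. apply (mloop_mono (alg pf pmin pmax k (S n) t)); auto.
  - rewrite alg_nu in H |- *. apply (mloop_mono (alg pf pmin pmax k (S n) t)); auto.
Qed.

Lemma alg_mono_le f1 f2 n t r res : (f1 <= f2)%nat ->
  alg pf pmin pmax f1 n t r = Some res -> alg pf pmin pmax f2 n t r = Some res.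
Proof. induction 1; auto. intros; apply alg_mono; auto. Qed.

Lemma alg_det f1 f2 n t r res1 res2 :
  alg pf pmin pmax f1 n t r = Some res1 -> alg pf pmin pmax f2 n t r = Some res2 -> res1 = res2.
Proof.
  intros H1 H2. apply (alg_mono_le f1 (Nat.max f1 f2)) in H1; [|lia].
  apply (alg_mono_le f2 (Nat.max f1 f2)) in H2; [|lia]. congruence.
Qed.

End Loop.
Lemma aff_lim_up H q d u w : d < u -> (forall x, d <= x < u -> H + q * x <= w) -> H + q * u <= w.
Proof.
  intros Hdu Hx. destruct (Rle_dec (H + q * u) w) as [|Hn]; auto. exfalso.
  set (eps := H + q * u - w).
  assert (Heps : 0 < eps) by (unfold eps; lra).
  destruct (Rle_dec q 0) as [Hq|Hq].
  - specialize (Hx d ltac:(lra)). assert (q * u <= q * d) by (apply Rmult_le_compat_neg_l; lra). lra.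
  - set (x := Rmax d (u - eps / (2 * q))).
    assert (Hx1 : d <= x) by (apply Rmax_l).
    assert (Hq' : 0 < q) by lra.
    assert (Hpos : 0 < eps / (2 * q)) by (apply Rdiv_lt_0_compat; lra).
    assert (Hx2 : x < u) by (unfold x, Rmax; destruct Rle_dec; lra).
    assert (Hx3 : u - eps / (2 * q) <= x) by apply Rmax_r.
    specialize (Hx x ltac:(lra)).
    assert (q * (u - eps / (2 * q)) <= q * x) by (apply Rmult_le_compat_l; lra).
    assert (E : q * (u - eps / (2 * q)) = q * u - eps / 2) by (field; lra).
    unfold eps in *. lra.
Qed.

Lemma aff_lim_down H q d u w : u < d -> (forall x, u < x <= d -> w <= H + q * x) -> w <= H + q * u.
Proof.
  intros Hud Hx.
  assert (- H + q * (- u) <= - w).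
  { apply (aff_lim_up (- H) q (- d) (- u) (- w)); [lra|].
    intros x Hx'. specialize (Hx (- x) ltac:(lra)). lra. }
  lra.
Qed.

Lemma aff_sign_up H q d u : d < u -> d <= H + q * d ->
  (forall x, d <= x < u -> H + q * x <> x) -> u <= H + q * u.
Proof.
  intros Hdu Hd Hx. destruct (Rle_dec u (H + q * u)) as [|Hn]; auto. exfalso.
  set (a := H + q * d - d). set (b := H + q * u - u).
  assert (Ha : 0 < a) by (pose proof (Hx d ltac:(lra)); unfold a; lra).
  assert (Hb : b < 0) by (unfold b; lra).
  set (x0 := d + a / (a - b) * (u - d)).
  assert (H0 : 0 < a / (a - b)) by (apply Rdiv_lt_0_compat; lra).
  assert (H1 : a / (a - b) < 1).
  { apply (Rmult_lt_reg_r (a - b)); [lra|]. unfold Rdiv. rewrite Rmult_assoc, Rinv_l by lra. lra. }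
  assert (Hx0 : d <= x0 < u).
  { unfold x0. split.
    - assert (0 <= a / (a - b) * (u - d)) by (apply Rmult_le_pos; lra). lra.
    - assert (a / (a - b) * (u - d) < 1 * (u - d)) by (apply Rmult_lt_compat_r; lra). lra. }
  apply (Hx x0 Hx0).
  assert (E1 : (q - 1) * (u - d) = b - a) by (unfold a, b; ring).
  assert (E2 : a / (a - b) * (b - a) = - a) by (field; lra).
  apply Rminus_diag_uniq.
  transitivity (a + a / (a - b) * ((q - 1) * (u - d))).
  - unfold x0. set (y := a / (a - b)). unfold a. ring.
  - rewrite E1, E2. ring.
Qed.

Lemma aff_sign_down H q d u : u < d -> H + q * d <= d ->
  (forall x, u < x <= d -> H + q * x <> x) -> H + q * u <= u.
Proof.
  intros Hud Hd Hx.
  assert (- u <= - H + q * (- u)).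
  { apply (aff_sign_up (- H) q (- d) (- u)); [lra|lra|].
    intros x Hx' E. apply (Hx (- x)); lra. }
  lra.
Qed.

Lemma cneg_holds c s : cholds (cneg c) s <-> ~ cholds c s.
Proof. destruct c; simpl; split; intros; lra. Qed.

Lemma remove_one (l : list result) (a : result) : exists l',
  (length l' <= length l)%nat /\ (In a l -> (length l' < length l)%nat) /\
  forall x, In x l -> x <> a -> In x l'.
Proof.
  induction l as [|b l IH].
  - exists []. simpl. split; [lia|split; [tauto|tauto]].
  - destruct IH as [l' [H1 [H2 H3]]].
    destruct (classic (b = a)) as [->|Hne].
    + exists l'. simpl. split; [lia|split; [intros; lia|]].
      intros x [<-|Hx] Hxa; [congruence|auto].
    + exists (b :: l'). simpl. split; [lia|split].
      * intros [->|Ha]; [congruence|]. specialize (H2 Ha). lia.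
      * intros x [<-|Hx] Hxa; [left; auto|right; auto].
Qed.

Definition Ncands n C e : list constr :=
  [CLt (ltrunc n e) (lconstant 0); CLt (lconstant 0) (ltrunc n e)] ++
  map (fun c => cneg (csubst n (fval n e) c)) C.

Fixpoint allres (isnu : bool) (Lp : list result) (n : nat) (m : nat) (D : list constr) (d : linexp)
  : list result :=
  match m with
  | O => []
  | S m' =>
    flat_map (fun rho => match rho with (C, e) =>
      [(D ++ map (csubst n d) C ++ [CLe (ltrunc n e) (lconstant 0); CLe (lconstant 0) (ltrunc n e)], d);
       (D ++ map (csubst n d) C ++ map (csubst n (fval n e)) C, fval n e)] ++
      flat_map (fun N => flat_map (fun bj =>
          allres isnu Lp n m' (D ++ map (csubst n d) C ++ [N] ++ newcs isnu (bnds isnu n C) bj)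
                 (lsubst n e bj)) (bnds isnu n C)) (Ncands n C e)
    end) Lp
  end.

Lemma fval_eval n e s : leval (fval n e) s = / (1 - coef n e) * leval (ltrunc n e) s.
Proof. unfold fval. apply leval_lscale. Qed.
Section Main.
Variable pf : list constr -> list R -> constr.
Variable pmin : list linexp -> list R -> linexp.
Variable pmax : list linexp -> list R -> linexp.
Hypothesis Hpf : pick_false_spec pf.
Hypothesis Hpmin : pick_min_spec pmin.
Hypothesis Hpmax : pick_max_spec pmax.

Notation alg := (alg pf pmin pmax).

Definition Corr n t := forall r fuel res, in_cube n r -> alg fuel n t r = Some res ->
  Choldsl (fst res) r /\
  (forall s, length s = n -> Choldsl (fst res) s -> in_cube n s /\ sem t s (leval (snd res) s)).
Definition Term n t := forall r, in_cube n r -> exists fuel res, alg fuel n t r = Some res.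
Definition Fin n t := exists L, forall r fuel res, in_cube n r -> alg fuel n t r = Some res -> In res L.
Definition Good n t := Term n t /\ Corr n t /\ Fin n t.

Lemma good_atom n t e :
  (forall k r, alg (S k) n t r = Some (range n, e)) ->
  (forall s, in_cube n s -> sem t s (leval e s)) -> Good n t.
Proof.
  intros Ha Hs. split; [|split].
  - intros r Hr. exists 1%nat, (range n, e). apply Ha.
  - intros r fuel res Hr H. destruct fuel; [discriminate|]. rewrite Ha in H.
    injection H as <-. simpl. split.
    + apply Choldsl_range; [apply Hr|auto].
    + intros s Hl Hc. apply (Choldsl_range n s Hl) in Hc. split; auto.
  - exists [(range n, e)]. intros r fuel res Hr H. destruct fuel; [discriminate|].
    rewrite Ha in H. injection H as <-. left; auto.
Qed.

Lemma good_scale n c t : 0 <= c <= 1 -> Good n t -> Good n (TScale c t).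
Proof.
  intros Hc [T [Co [L HL]]]. split; [|split].
  - intros r Hr. destruct (T r Hr) as [f [[C1 e1] H]].
    exists (S f), (C1, lscale c e1). rewrite alg_scale, H. reflexivity.
  - intros r fuel res Hr H. destruct fuel; [discriminate|]. rewrite alg_scale in H.
    destruct (alg fuel n t r) as [[C1 e1]|] eqn:E; [|discriminate]. injection H as <-.
    destruct (Co r fuel (C1, e1) Hr E) as [H1 H2]. simpl in *. split; auto.
    intros s Hl Hs. destruct (H2 s Hl Hs) as [Hcu Hsem]. split; auto.
    simpl. exists (leval e1 s). split; auto. apply leval_lscale.
  - exists (map (fun p => (fst p, lscale c (snd p))) L). intros r fuel res Hr H.
    destruct fuel; [discriminate|]. rewrite alg_scale in H.
    destruct (alg fuel n t r) as [[C1 e1]|] eqn:E; [|discriminate]. injection H as <-.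
    apply in_map_iff. exists (C1, e1). split; auto. eapply HL; eauto.
Qed.

Lemma good_bin n a b t f (g : list constr -> linexp -> list constr -> linexp -> list result)
  (OP : R -> R -> R) :
  Good n a -> Good n b ->
  (forall k r, alg (S k) n t r = bin2 pf pmin pmax k n a b r (f r)) ->
  (forall r C1 e1 C2 e2, exists c e, f r C1 e1 C2 e2 = (C1 ++ C2 ++ [c], e) /\ cholds c r /\
     In (C1 ++ C2 ++ [c], e) (g C1 e1 C2 e2) /\
     (forall s, cholds c s -> leval e s = OP (leval e1 s) (leval e2 s))) ->
  (forall s u w, sem a s u -> sem b s w -> sem t s (OP u w)) ->
  Good n t.
Proof.
  intros [Ta [Ca [La HLa]]] [Tb [Cb [Lb HLb]]] Ha HF Hsem. split; [|split].
  - intros r Hr. destruct (Ta r Hr) as [f1 [[C1 e1] H1]]. destruct (Tb r Hr) as [f2 [[C2 e2] H2]].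
    apply (alg_mono_le pf pmin pmax f1 (Nat.max f1 f2)) in H1; [|lia].
    apply (alg_mono_le pf pmin pmax f2 (Nat.max f1 f2)) in H2; [|lia].
    exists (S (Nat.max f1 f2)). rewrite Ha. unfold bin2. rewrite H1, H2. eauto.
  - intros r fuel res Hr H. destruct fuel; [discriminate|]. rewrite Ha in H. unfold bin2 in H.
    destruct (alg fuel n a r) as [[C1 e1]|] eqn:E1; [|discriminate].
    destruct (alg fuel n b r) as [[C2 e2]|] eqn:E2; [|discriminate]. injection H as <-.
    destruct (HF r C1 e1 C2 e2) as [c [e [-> [Hcr [_ He]]]]].
    destruct (Ca r fuel _ Hr E1) as [P1a P2a]; destruct (Cb r fuel _ Hr E2) as [P1b P2b].
    simpl in *. split.
    + apply Choldsl_app; split; auto. apply Choldsl_app; split; auto. constructor; auto.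
    + intros s Hl Hs. apply Choldsl_app in Hs as [Hs1 Hs]. apply Choldsl_app in Hs as [Hs2 Hs3].
      assert (Hc0 := Choldsl_In _ _ c Hs3 (or_introl eq_refl)). destruct (P2a s Hl Hs1) as [Hcu Hsa]. destruct (P2b s Hl Hs2) as [_ Hsb].
      split; auto. rewrite He by auto. apply Hsem; auto.
  - exists (flat_map (fun p1 => flat_map (fun p2 => g (fst p1) (snd p1) (fst p2) (snd p2)) Lb) La).
    intros r fuel res Hr H. destruct fuel; [discriminate|]. rewrite Ha in H. unfold bin2 in H.
    destruct (alg fuel n a r) as [[C1 e1]|] eqn:E1; [|discriminate].
    destruct (alg fuel n b r) as [[C2 e2]|] eqn:E2; [|discriminate]. injection H as <-.
    destruct (HF r C1 e1 C2 e2) as [c [e [-> [_ [Hin _]]]]].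
    apply in_flat_map. exists (C1, e1). split; [eapply HLa; eauto|].
    apply in_flat_map. exists (C2, e2). split; [eapply HLb; eauto|]. exact Hin.
Qed.

Lemma good_join n a b : Good n a -> Good n b -> Good n (TJoin a b).
Proof.
  intros Ga Gb. apply (good_bin n a b _ fjoin
    (fun C1 e1 C2 e2 => [(C1 ++ C2 ++ [CLe e1 e2], e2); (C1 ++ C2 ++ [CLe e2 e1], e1)]) Rmax); [exact Ga|exact Gb|intros; apply alg_join| |].
  - intros r C1 e1 C2 e2. unfold fjoin. destruct Rle_dec.
    + do 2 eexists; split; [reflexivity|]. simpl. split; auto. split; [left; auto|].
      intros s Hs. unfold Rmax; destruct Rle_dec; lra.
    + do 2 eexists; split; [reflexivity|]. simpl. split; [lra|]. split; [right; left; auto|].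
      intros s Hs. unfold Rmax; destruct Rle_dec; lra.
  - intros s u w Hu Hw. simpl. eauto 6.
Qed.

Lemma good_meet n a b : Good n a -> Good n b -> Good n (TMeet a b).
Proof.
  intros Ga Gb. apply (good_bin n a b _ fmeet
    (fun C1 e1 C2 e2 => [(C1 ++ C2 ++ [CLe e1 e2], e1); (C1 ++ C2 ++ [CLe e2 e1], e2)]) Rmin); [exact Ga|exact Gb|intros; apply alg_meet| |].
  - intros r C1 e1 C2 e2. unfold fmeet. destruct Rle_dec.
    + do 2 eexists; split; [reflexivity|]. simpl. split; auto. split; [left; auto|].
      intros s Hs. unfold Rmin; destruct Rle_dec; lra.
    + do 2 eexists; split; [reflexivity|]. simpl. split; [lra|]. split; [right; left; auto|].
      intros s Hs. unfold Rmin; destruct Rle_dec; lra.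
  - intros s u w Hu Hw. simpl. eauto 6.
Qed.

Lemma good_oplus n a b : Good n a -> Good n b -> Good n (TOplus a b).
Proof.
  intros Ga Gb. apply (good_bin n a b _ foplus
    (fun C1 e1 C2 e2 => [(C1 ++ C2 ++ [CLe (ladd e1 e2) (lconstant 1)], ladd e1 e2);
                         (C1 ++ C2 ++ [CLe (lconstant 1) (ladd e1 e2)], lconstant 1)])
    (fun u w => Rmin (u + w) 1)); [exact Ga|exact Gb|intros; apply alg_oplus| |].
  - intros r C1 e1 C2 e2. unfold foplus. destruct Rle_dec.
    + do 2 eexists; split; [reflexivity|]. simpl. rewrite leval_lconstant. split; auto.
      split; [left; auto|].
      intros s Hs. simpl in Hs. rewrite leval_lconstant, leval_ladd in *. unfold Rmin; destruct Rle_dec; lra.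
    + do 2 eexists; split; [reflexivity|]. simpl. rewrite leval_lconstant. split; [lra|].
      split; [right; left; auto|].
      intros s Hs. simpl in Hs. rewrite leval_lconstant, leval_ladd in *. unfold Rmin; destruct Rle_dec; lra.
  - intros s u w Hu Hw. simpl. eauto 6.
Qed.

Lemma good_odot n a b : Good n a -> Good n b -> Good n (TOdot a b).
Proof.
  intros Ga Gb. apply (good_bin n a b _ fodot
    (fun C1 e1 C2 e2 => [(C1 ++ C2 ++ [CLe (lconstant 1) (ladd e1 e2)], lsub (ladd e1 e2) (lconstant 1));
                         (C1 ++ C2 ++ [CLe (ladd e1 e2) (lconstant 1)], lconstant 0)])
    (fun u w => Rmax (u + w - 1) 0)); [exact Ga|exact Gb|intros; apply alg_odot| |].
  - intros r C1 e1 C2 e2. unfold fodot. destruct Rle_dec.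
    + do 2 eexists; split; [reflexivity|]. simpl. rewrite leval_lconstant. split; auto.
      split; [left; auto|].
      intros s Hs. simpl in Hs. rewrite leval_lsub, leval_lconstant, leval_ladd in *. unfold Rmax; destruct Rle_dec; lra.
    + do 2 eexists; split; [reflexivity|]. simpl. rewrite leval_lconstant. split; [lra|].
      split; [right; left; auto|].
      intros s Hs. simpl in Hs. rewrite leval_lconstant, leval_ladd in *. unfold Rmax; destruct Rle_dec; lra.
  - intros s u w Hu Hw. simpl. eauto 6.
Qed.
Lemma not_Choldsl C s : ~ Choldsl C s -> exists c, In c C /\ ~ cholds c s.
Proof.
  intros H. apply NNPP; intros Hn. apply H. unfold Choldsl; rewrite Forall_forall.
  intros c Hc. apply NNPP; intro; apply Hn; eauto.
Qed.

Lemma solve_fix q H w : q <> 1 -> H + q * w = w -> w = / (1 - q) * H.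
Proof.
  intros Hq E. assert (1 - q <> 0) by (intro; apply Hq; lra).
  assert (H = (1 - q) * w) by lra. subst H. field. auto.
Qed.

Lemma nfix n r C e N s w : length s = n -> NCond pf n r C e N -> cholds N s ->
  Choldsl C (s ++ [w]) -> leval e (s ++ [w]) = w -> False.
Proof.
  intros Hs HN HNs HC HE. rewrite (leval_app n) in HE by auto.
  destruct HN as [[Hq [[Hh ->]|[Hh ->]]]|[Hq [Hnc ->]]]; simpl in HNs;
    rewrite ?leval_lconstant in HNs.
  - rewrite Hq in HE. lra.
  - rewrite Hq in HE. lra.
  - apply cneg_holds in HNs. rewrite (cholds_csubst n) in HNs by auto.
    destruct (Hpf C (r ++ [leval (fval n e) r])) as [Hin _].
    { apply not_Choldsl; auto. }
    apply HNs. rewrite (fval_eval n e s). rewrite <- (solve_fix _ _ _ Hq HE).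
    eapply Choldsl_In; eauto.
Qed.

Lemma NCond_r n r C e N : length r = n -> NCond pf n r C e N -> cholds N r.
Proof.
  intros Hs [[Hq [[Hh ->]|[Hh ->]]]|[Hq [Hnc ->]]]; simpl; rewrite ?leval_lconstant; auto.
  apply cneg_holds. rewrite (cholds_csubst n) by auto.
  destruct (Hpf C (r ++ [leval (fval n e) r])) as [_ Hf]; auto.
  apply not_Choldsl; auto.
Qed.

Lemma NCond_in n r C e N : NCond pf n r C e N -> In N (Ncands n C e).
Proof.
  intros [[Hq [[Hh ->]|[Hh ->]]]|[Hq [Hnc ->]]].
  - left; auto.
  - right; left; auto.
  - right; right. apply (in_map (fun c => cneg (csubst n (fval n e) c))). apply Hpf. apply not_Choldsl; auto.
Qed.

Lemma upper_In n C b : In b (upper_bounds n C) <-> exists c, In c C /\ gcoef n c < 0 /\ b = Defs.bound n c.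
Proof.
  unfold upper_bounds, gcoef. rewrite in_map_iff. split.
  - intros [c [<- Hc]]. apply filter_In in Hc as [Hc Hf]. destruct Rlt_dec; [|discriminate].
    eauto.
  - intros [c [Hc [Hg ->]]]. exists c; split; auto. apply filter_In; split; auto.
    destruct Rlt_dec; auto; lra.
Qed.

Lemma lower_In n C b : In b (lower_bounds n C) <-> exists c, In c C /\ 0 < gcoef n c /\ b = Defs.bound n c.
Proof.
  unfold lower_bounds, gcoef. rewrite in_map_iff. split.
  - intros [c [<- Hc]]. apply filter_In in Hc as [Hc Hf]. destruct Rlt_dec; [|discriminate].
    eauto.
  - intros [c [Hc [Hg ->]]]. exists c; split; auto. apply filter_In; split; auto.
    destruct Rlt_dec; auto; lra.
Qed.

Lemma newcs_holds isnu bs bj s : Choldsl (newcs isnu bs bj) s <->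
  forall b, In b bs -> if isnu then leval b s <= leval bj s else leval bj s <= leval b s.
Proof.
  unfold Choldsl, newcs. rewrite Forall_map, Forall_forall.
  split; intros H b Hb; specialize (H b Hb); destruct isnu; simpl in *; auto.
Qed.

Lemma NCond_DirectRes n r C e N D d res : NCond pf n r C e N -> DirectRes n r C e D d res -> False.
Proof. unfold NCond, DirectRes; intuition (try lra; try congruence). Qed.

Lemma NCond_uniq n r C e N N' : NCond pf n r C e N -> NCond pf n r C e N' -> N = N'.
Proof. unfold NCond; intuition (try lra; try congruence). Qed.
Lemma mloop_S A n r isnu j D d :
  mloop pf pmin pmax A n r isnu (S j) D d = mbody pf pmin pmax (mloop pf pmin pmax A n r isnu j) A n r isnu D d.
Proof. reflexivity. Qed.

Section Mu.
Variable n : nat.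
Variable t1 : term.
Hypothesis Hw : wf (S n) t1.
Hypothesis G1 : Good (S n) t1.
Variable r : list R.
Hypothesis Hr : in_cube n r.

Lemma Hrl : length r = n.
Proof. apply Hr. Qed.

Definition InvS D d := forall s, in_cube n s -> Choldsl D s ->
  forall w, 0 <= w <= 1 -> sem t1 (s ++ [w]) w -> leval d s <= w.
Definition InvR D d := Choldsl D r /\ 0 <= leval d r <= 1.
Definition RegionOK C e := forall s', length s' = S n -> Choldsl C s' ->
  in_cube (S n) s' /\ sem t1 s' (leval e s').

Lemma reg_sem C e s x : RegionOK C e -> length s = n -> Choldsl C (s ++ [x]) ->
  in_cube n s /\ 0 <= x <= 1 /\ sem t1 (s ++ [x]) (leval e (s ++ [x])).
Proof.
  intros Hreg Hs HC. destruct (Hreg (s ++ [x])) as [Hc Hsem]; auto.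
  - rewrite length_app; simpl; lia.
  - apply in_cube_app in Hc as [H1 H2]. auto.
Qed.

Lemma mu_bs_nonempty C e d : RegionOK C e -> Choldsl C (r ++ [leval d r]) ->
  leval d r <= 1 -> bnds false n C <> [].
Proof.
  intros Hreg HC Hd1 Hb.
  assert (HC2 : Choldsl C (r ++ [2])).
  { unfold Choldsl; rewrite Forall_forall. intros c Hc.
    apply (c_ext n c r (leval d r) 2 Hrl); [eapply Choldsl_In; eauto|lra|].
    intros Hg. assert (In (Defs.bound n c) (bnds false n C)) by (apply upper_In; eauto).
    rewrite Hb in H; destruct H. }
  destruct (reg_sem C e r 2 Hreg Hrl HC2) as [_ [H _]]. lra.
Qed.

Lemma mono_t1 s x w u v : in_cube n s -> 0 <= x <= 1 -> 0 <= w <= 1 -> x <= w ->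
  sem t1 (s ++ [x]) u -> sem t1 (s ++ [w]) v -> u <= v.
Proof.
  intros Hs Hx Hw' Hxw Hu Hv. destruct (sem_all t1 (S n) Hw) as [_ [_ Mn]].
  apply (Mn _ _ _ _ (cube_app _ _ _ Hs Hx) (cube_app _ _ _ Hs Hw')
           (Forall2_app_last _ _ _ _ (Forall2_refl s) Hxw) Hu Hv).
Qed.

Lemma mu_step D d C e N bj :
  InvR D d -> InvS D d -> RegionOK C e -> Choldsl C (r ++ [leval d r]) ->
  NCond pf n r C e N -> In bj (bnds false n C) ->
  (forall b, In b (bnds false n C) -> leval bj r <= leval b r) ->
  InvR (D ++ map (csubst n d) C ++ [N] ++ newcs false (bnds false n C) bj) (lsubst n e bj) /\
  InvS (D ++ map (csubst n d) C ++ [N] ++ newcs false (bnds false n C) bj) (lsubst n e bj) /\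
  leval d r <= leval (lsubst n e bj) r /\
  (forall x, Choldsl C (r ++ [x]) -> x < leval (lsubst n e bj) r).
Proof.
  intros [HDr Hdr] HS Hreg HC1 HN Hbj Hmin. pose proof Hrl as Hrl0.
  set (bs := bnds false n C) in *.
  assert (Hbs : forall b, In b bs <-> exists c, In c C /\ gcoef n c < 0 /\ b = Defs.bound n c)
    by (intros; apply upper_In).
  destruct (proj1 (Hbs bj) Hbj) as [cj [Hcj [Hgj Hbjc]]].
  assert (Hregion : forall s, length s = n -> Choldsl C (s ++ [leval d s]) ->
    (forall b, In b bs -> leval bj s <= leval b s) ->
    forall x, leval d s <= x < leval bj s -> Choldsl C (s ++ [x])).
  { intros s Hs HC Hb x Hx. unfold Choldsl; rewrite Forall_forall. intros c Hc.
    apply (c_ext n c s (leval d s) x Hs); [eapply Choldsl_In; eauto|lra|].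
    intros Hg. assert (In (Defs.bound n c) bs) by (apply Hbs; eauto).
    specialize (Hb _ H). lra. }
  assert (Hle_bj : forall s x, length s = n -> Choldsl C (s ++ [x]) -> x <= leval bj s).
  { intros s x Hs HC. rewrite Hbjc. apply (c_upper n cj s x Hs Hgj). eapply Choldsl_In; eauto. }
  assert (HEapp : forall s x, length s = n -> leval e (s ++ [x]) = leval (ltrunc n e) s + coef n e * x)
    by (intros; apply leval_app; auto).
  assert (HS' : InvS (D ++ map (csubst n d) C ++ [N] ++ newcs false bs bj) (lsubst n e bj)).
  { intros s Hs HD' w Hw' Hfix. pose proof (proj1 Hs) as Hls.
    apply Choldsl_app in HD' as [HD HD']. apply Choldsl_app in HD' as [HCd HD'].
    apply Choldsl_app in HD' as [HNs Hnew].
    apply (Choldsl_csubst n d C s Hls) in HCd.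
    assert (HNs' : cholds N s) by (eapply Choldsl_In; [exact HNs|left; auto]).
    assert (Hnew2 := proj1 (newcs_holds false bs bj s) Hnew). clear Hnew. rename Hnew2 into Hnew. simpl in Hnew.
    rewrite (leval_lsubst n) by auto.
    assert (Hdw : leval d s <= w) by (apply (HS s); auto).
    assert (Hdu : leval d s <= leval bj s) by (apply Hle_bj; auto).
    assert (Hmono : forall x, Choldsl C (s ++ [x]) -> x <= w -> leval e (s ++ [x]) <= w).
    { intros x HCx Hxw. destruct (reg_sem C e s x Hreg Hls HCx) as [_ [Hx Hsx]].
      apply (mono_t1 s x w _ _ Hs Hx Hw' Hxw Hsx Hfix). }
    assert (Hwu : leval bj s <= w).
    { destruct (Rle_dec (leval bj s) w) as [|Hn]; auto. exfalso.
      assert (HCw : Choldsl C (s ++ [w])) by (apply (Hregion s Hls HCd Hnew); lra).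
      destruct (reg_sem C e s w Hreg Hls HCw) as [_ [_ Hsw]].
      apply (nfix n r C e N s w Hls HN HNs' HCw). apply (sem_det _ _ _ _ Hsw Hfix). }
    destruct (Req_dec (leval d s) (leval bj s)) as [Heq|Hne].
    - rewrite <- Heq. apply Hmono; auto.
    - rewrite HEapp by auto. apply (aff_lim_up _ _ (leval d s)); [lra|].
      intros x Hx. rewrite <- HEapp by auto. apply Hmono; [|lra].
      apply (Hregion s Hls HCd Hnew); lra. }
  assert (HD'r : Choldsl (D ++ map (csubst n d) C ++ [N] ++ newcs false bs bj) r).
  { apply Choldsl_app; split; auto. apply Choldsl_app; split.
    - apply (Choldsl_csubst n d C r Hrl); auto.
    - apply Choldsl_app; split.
      + constructor; [|constructor]. apply (NCond_r n r C e N Hrl HN).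
      + apply (proj2 (newcs_holds false bs bj r)). simpl. auto. }
  destruct (sem_all (TMu t1) n Hw) as [_ [Tmu _]].
  destruct (Tmu r Hr) as [v Hv]. pose proof Hv as [Hv01 [Hvfix Hvleast]].
  assert (Hd'v : leval (lsubst n e bj) r <= v) by (apply (HS' r Hr HD'r v); auto).
  assert (Hdrv : (leval d r) <= v) by (apply (HS r Hr HDr v); auto).
  assert (HNr : cholds N r) by (apply (NCond_r n r C e N Hrl HN)).
  assert (Hed : (leval d r) <= leval e (r ++ [(leval d r)])).
  { destruct (Rle_dec (leval d r) (leval e (r ++ [(leval d r)]))) as [|Hn]; auto. exfalso.
    destruct (reg_sem C e r (leval d r) Hreg Hrl HC1) as [_ [Hdr01 Hsd]].
    assert (v <= (leval d r)) by (apply (mu_prefixed n t1 r v (leval d r) _ Hw Hr Hv Hdr01 Hsd); lra).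
    assert (v = (leval d r)) by lra. subst v.
    pose proof (sem_det _ _ _ _ Hsd Hvfix). lra. }
  assert (Hdu : (leval d r) <= (leval bj r)) by (apply Hle_bj; [exact Hrl|auto]).
  assert (Hnew_r : forall b, In b bs -> leval bj r <= leval b r) by auto.
  assert (Hgu : (leval bj r) <= leval e (r ++ [(leval bj r)])).
  { destruct (Req_dec (leval d r) (leval bj r)) as [Heq|Hne].
    - rewrite <- Heq; auto.
    - rewrite HEapp by auto. apply (aff_sign_up _ _ (leval d r)); [lra| rewrite <- HEapp by auto; auto|].
      intros x Hx E. rewrite <- HEapp in E by auto.
      apply (nfix n r C e N r x Hrl HN HNr); [|exact E].
      apply (Hregion r Hrl HC1 Hnew_r); lra. }
  rewrite (leval_lsubst n e bj r Hrl) in *.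
  split; [|split; [|split]].
  - split; auto. rewrite (leval_lsubst n e bj r Hrl). lra.
  - exact HS'.
  - lra.
  - intros x HCx. pose proof (Hle_bj r x Hrl HCx) as Hxu.
    destruct (Req_dec x (leval bj r)) as [Hxe|Hne]; [|lra].
    destruct (Req_dec (leval e (r ++ [(leval bj r)])) (leval bj r)) as [E|]; [|lra].
    exfalso. subst x. apply (nfix n r C e N r (leval bj r) Hrl HN HNr HCx E).
Qed.
Lemma mu_ret D d C e res :
  InvR D d -> InvS D d -> RegionOK C e -> Choldsl C (r ++ [leval d r]) ->
  DirectRes n r C e D d res ->
  Choldsl (fst res) r /\
  (forall s, length s = n -> Choldsl (fst res) s -> in_cube n s /\ sem (TMu t1) s (leval (snd res) s)).
Proof.
  intros [HDr Hdr] HS Hreg HC1 [[Hq [Hh ->]]|[Hq [HCf ->]]]; simpl; pose proof Hrl as Hrl0.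
  - split.
    + apply Choldsl_app; split; auto. apply Choldsl_app; split.
      * apply (Choldsl_csubst n d C r Hrl); auto.
      * constructor; [|constructor; [|constructor]]; simpl; rewrite leval_lconstant; lra.
    + intros s Hs H. apply Choldsl_app in H as [HD H]. apply Choldsl_app in H as [HCd H].
      apply (Choldsl_csubst n d C s Hs) in HCd.
      pose proof (Choldsl_In _ _ _ H (or_introl eq_refl)) as H1.
      pose proof (Choldsl_In _ _ _ H (or_intror (or_introl eq_refl))) as H2.
      simpl in H1, H2. rewrite leval_lconstant in H1, H2.
      destruct (reg_sem C e s (leval d s) Hreg Hs HCd) as [Hcs [Hd01 Hsem]].
      rewrite (leval_app n) in Hsem by auto. rewrite Hq in Hsem.
      replace (leval (ltrunc n e) s + 1 * leval d s) with (leval d s) in Hsem by lra.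
      split; [exact Hcs|]. simpl. split; [exact Hd01|]. split; [exact Hsem|].
      intros w Hw' Hf. apply (HS s); auto.
  - split.
    + apply Choldsl_app; split; auto. apply Choldsl_app; split.
      * apply (Choldsl_csubst n d C r Hrl); auto.
      * apply (Choldsl_csubst n (fval n e) C r Hrl); auto.
    + intros s Hs H. apply Choldsl_app in H as [HD H]. apply Choldsl_app in H as [HCd HCf'].
      apply (Choldsl_csubst n d C s Hs) in HCd. apply (Choldsl_csubst n _ C s Hs) in HCf'.
      destruct (reg_sem C e s _ Hreg Hs HCf') as [Hcs [Hf01 Hsem]].
      assert (Hq' : 1 - coef n e <> 0) by (intro; apply Hq; lra).
      assert (Ef : leval e (s ++ [leval (fval n e) s]) = leval (fval n e) s).
      { rewrite (leval_app n) by auto. rewrite fval_eval. field. auto. }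
      rewrite Ef in Hsem.
      split; [exact Hcs|]. simpl. split; [exact Hf01|]. split; [exact Hsem|].
      intros w Hw' Hfw. pose proof (HS s Hcs HD w Hw' Hfw) as Hdw.
      destruct (Rle_dec (leval (fval n e) s) w) as [|Hn]; auto. exfalso.
      assert (HCw : Choldsl C (s ++ [w])).
      { unfold Choldsl; rewrite Forall_forall; intros c Hc.
        apply (c_convex n c s (leval d s) (leval (fval n e) s) w Hs);
          [eapply Choldsl_In; eauto|eapply Choldsl_In; eauto|lra]. }
      destruct (reg_sem C e s w Hreg Hs HCw) as [_ [_ Hsw]].
      pose proof (sem_det _ _ _ _ Hsw Hfw) as Ew.
      rewrite (leval_app n) in Ew by auto.
      pose proof (solve_fix _ _ _ Hq Ew). rewrite fval_eval in Hn. lra.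
Qed.

Lemma mu_corr k : forall j D d res, InvR D d -> InvS D d ->
  mloop pf pmin pmax (alg k (S n) t1) n r false j D d = Some res ->
  Choldsl (fst res) r /\
  (forall s, length s = n -> Choldsl (fst res) s -> in_cube n s /\ sem (TMu t1) s (leval (snd res) s)).
Proof.
  induction j as [|j IH]; intros D d res HR HS H; [discriminate|].
  rewrite mloop_S in H.
  destruct (alg k (S n) t1 (r ++ [leval d r])) as [[C e]|] eqn:EA;
    [|rewrite mbody_none in H by auto; discriminate].
  destruct G1 as [_ [Co _]].
  assert (Hin : in_cube (S n) (r ++ [leval d r])) by (apply cube_app; [exact Hr|apply HR]).
  destruct (Co _ _ _ Hin EA) as [HC1 HC2]. simpl in HC1, HC2.
  assert (Hreg : RegionOK C e) by exact HC2.
  assert (Hne := mu_bs_nonempty C e d Hreg HC1 (proj2 (proj2 HR))).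
  destruct (mbody_cases pf pmin pmax (mloop pf pmin pmax (alg k (S n) t1) n r false j) _ n r false D d C e EA Hne)
    as [[res' [E Hd]]|[N [HN E]]]; rewrite E in H.
  - injection H as <-. apply (mu_ret D d C e res'); auto.
  - change (pick pmin pmax false (bnds false n C) r) with (pmin (bnds false n C) r) in H.
    destruct (Hpmin (bnds false n C) r Hne) as [Hbj Hmin].
    destruct (mu_step D d C e N _ HR HS Hreg HC1 HN Hbj Hmin) as [HR' [HS' _]].
    apply (IH _ _ _ HR' HS' H).
Qed.
Variable Lp : list result.
Hypothesis HLp : forall r' fuel rho, in_cube (S n) r' -> alg fuel (S n) t1 r' = Some rho -> In rho Lp.

Lemma allres_in_direct isnu m' D d C e res : In (C, e) Lp -> DirectRes n r C e D d res ->
  In res (allres isnu Lp n (S m') D d).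
Proof.
  intros HC Hd. cbn [allres]. apply in_flat_map. exists (C, e). split; auto.
  cbv beta iota. apply in_app_iff; left. destruct Hd as [[_ [_ ->]]|[_ [_ ->]]]; simpl; auto.
Qed.

Lemma allres_in_next isnu m' D d C e N bj res : In (C, e) Lp -> In N (Ncands n C e) ->
  In bj (bnds isnu n C) ->
  In res (allres isnu Lp n m' (D ++ map (csubst n d) C ++ [N] ++ newcs isnu (bnds isnu n C) bj) (lsubst n e bj)) ->
  In res (allres isnu Lp n (S m') D d).
Proof.
  intros HC HN Hb H. cbn [allres]. apply in_flat_map. exists (C, e). split; auto.
  cbv beta iota. apply in_app_iff; right. apply in_flat_map. exists N; split; auto.
  apply in_flat_map. exists bj; split; auto.
Qed.

Lemma mu_tf : forall m Rem D d, (length Rem <= m)%nat -> InvR D d -> InvS D d ->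
  (forall x fuel rho, 0 <= x <= 1 -> leval d r <= x -> alg fuel (S n) t1 (r ++ [x]) = Some rho -> In rho Rem) ->
  (exists K, forall k j, (K <= k)%nat -> (K <= j)%nat ->
     exists res, mloop pf pmin pmax (alg k (S n) t1) n r false j D d = Some res) /\
  (forall k j res, mloop pf pmin pmax (alg k (S n) t1) n r false j D d = Some res ->
     In res (allres false Lp n m D d)).
Proof.
  induction m as [|m IH]; intros Rem D d Hlen HR HS Hcov;
  pose proof Hrl as Hrl0; pose proof G1 as [T1 [Co _]];
  (assert (Hin : in_cube (S n) (r ++ [leval d r])) by (apply cube_app; [exact Hr|apply HR]));
  destruct (T1 _ Hin) as [F0 [[C e] EA0]];
  assert (HinRem := Hcov (leval d r) F0 (C, e) (proj2 HR) (Rle_refl _) EA0).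
  - destruct Rem; [destruct HinRem|simpl in Hlen; lia].
  - destruct (Co _ _ _ Hin EA0) as [HC1 HC2]. simpl in HC1, HC2.
    assert (Hreg : RegionOK C e) by exact HC2.
    assert (Hne := mu_bs_nonempty C e d Hreg HC1 (proj2 (proj2 HR))).
    assert (EAk : forall k, (F0 <= k)%nat -> alg k (S n) t1 (r ++ [leval d r]) = Some (C, e))
      by (intros; eapply alg_mono_le; eauto).
    assert (EAany : forall k rho, alg k (S n) t1 (r ++ [leval d r]) = Some rho -> rho = (C, e))
      by (intros; eapply alg_det; eauto).
    assert (HCeLp : In (C, e) Lp) by (eapply HLp; eauto).
    destruct (classic (exists res0, DirectRes n r C e D d res0)) as [[res0 Hd0]|Hnd].
    + split.
      * exists (S F0). intros k j Hk Hj. destruct j as [|j]; [lia|]. rewrite mloop_S.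
        destruct (mbody_cases pf pmin pmax (mloop pf pmin pmax (alg k (S n) t1) n r false j) _ n r false D d C e
                    (EAk k ltac:(lia)) Hne) as [[res' [E _]]|[N [HN _]]].
        -- eauto.
        -- exfalso; eapply NCond_DirectRes; eauto.
      * intros k j res H. destruct j as [|j]; [discriminate|]. rewrite mloop_S in H.
        destruct (alg k (S n) t1 (r ++ [leval d r])) as [rho|] eqn:EA;
          [|rewrite mbody_none in H by auto; discriminate].
        rewrite (EAany _ _ EA) in EA.
        destruct (mbody_cases pf pmin pmax (mloop pf pmin pmax (alg k (S n) t1) n r false j) _ n r false D d C e
                    EA Hne) as [[res' [E Hd]]|[N [HN _]]].
        -- rewrite E in H. injection H as <-. eapply allres_in_direct; eauto.
        -- exfalso; eapply NCond_DirectRes; eauto.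
    + destruct (mbody_cases pf pmin pmax (fun _ _ => None) _ n r false D d C e EA0 Hne)
        as [[res' [_ Hd]]|[N [HN _]]]; [exfalso; apply Hnd; eauto|].
      destruct (Hpmin (bnds false n C) r Hne) as [Hbj Hmin].
      destruct (mu_step D d C e N _ HR HS Hreg HC1 HN Hbj Hmin) as [HR' [HS' [Hdd' Hprog]]].
      destruct (remove_one Rem (C, e)) as [Rem' [_ [Hlt Hsub]]].
      specialize (Hlt HinRem).
      match type of HR' with InvR ?D' ?d' =>
        assert (Hcov' : forall x fuel rho, 0 <= x <= 1 -> leval d' r <= x ->
                  alg fuel (S n) t1 (r ++ [x]) = Some rho -> In rho Rem');
        [|destruct (IH Rem' D' d' ltac:(lia) HR' HS' Hcov') as [[K HK] Hfin]] end.
      { intros x fuel rho Hx Hdx E. apply Hsub; [apply (Hcov x fuel rho Hx); [lra|auto]|].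
        intros ->. destruct (Co (r ++ [x]) fuel (C, e) (cube_app _ _ _ Hr Hx) E) as [HCx _].
        simpl in HCx. specialize (Hprog x HCx). lra. }
      split.
      * exists (S (Nat.max F0 K)). intros k j Hk Hj. destruct j as [|j]; [lia|]. rewrite mloop_S.
        destruct (mbody_cases pf pmin pmax (mloop pf pmin pmax (alg k (S n) t1) n r false j) _ n r false D d C e
                    (EAk k ltac:(lia)) Hne) as [[res' [E Hd]]|[N' [HN' E]]].
        -- exfalso; apply Hnd; eauto.
        -- rewrite (NCond_uniq _ _ _ _ _ _ HN' HN) in E. rewrite E. apply HK; lia.
      * intros k j res H. destruct j as [|j]; [discriminate|]. rewrite mloop_S in H.
        destruct (alg k (S n) t1 (r ++ [leval d r])) as [rho|] eqn:EA;
          [|rewrite mbody_none in H by auto; discriminate].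
        rewrite (EAany _ _ EA) in EA.
        destruct (mbody_cases pf pmin pmax (mloop pf pmin pmax (alg k (S n) t1) n r false j) _ n r false D d C e
                    EA Hne) as [[res' [E Hd]]|[N' [HN' E]]].
        -- exfalso; apply Hnd; eauto.
        -- rewrite (NCond_uniq _ _ _ _ _ _ HN' HN) in E. rewrite E in H.
           apply (allres_in_next false m D d C e N _ res HCeLp (NCond_in _ _ _ _ _ HN) Hbj).
           apply (Hfin k j res H).
Qed.
End Mu.

Lemma good_mu n t1 : wf (S n) t1 -> Good (S n) t1 -> Good n (TMu t1).
Proof.
  intros Hw G1. pose proof G1 as [T1 [Co1 [Lp HLp]]].
  assert (HR0 : forall r, in_cube n r -> InvR r [] (lconstant 0)).
  { intros r Hr. split; [constructor|]. rewrite leval_lconstant; lra. }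
  assert (HS0 : InvS n t1 [] (lconstant 0)).
  { intros s Hs _ w Hw' _. rewrite leval_lconstant; lra. }
  assert (Hcov0 : forall r, in_cube n r -> forall x fuel rho, 0 <= x <= 1 ->
     leval (lconstant 0) r <= x -> alg fuel (S n) t1 (r ++ [x]) = Some rho -> In rho Lp).
  { intros r Hr x fuel rho Hx _ E. apply (HLp (r ++ [x]) fuel); auto. apply cube_app; auto. }
  split; [|split].
  - intros r Hr.
    destruct (mu_tf n t1 Hw G1 r Hr Lp HLp (length Lp) Lp [] (lconstant 0) (le_n _) (HR0 r Hr) HS0 (Hcov0 r Hr))
      as [[K HK] _].
    destruct (HK K K (le_n _) (le_n _)) as [res Hres].
    exists (S K), res. rewrite alg_mu. exact Hres.
  - intros r fuel res Hr H. destruct fuel as [|k]; [discriminate|]. rewrite alg_mu in H.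
    apply (mu_corr n t1 Hw G1 r Hr k k [] (lconstant 0) res (HR0 r Hr) HS0 H).
  - exists (allres false Lp n (length Lp) [] (lconstant 0)).
    intros r fuel res Hr H. destruct fuel as [|k]; [discriminate|]. rewrite alg_mu in H.
    destruct (mu_tf n t1 Hw G1 r Hr Lp HLp (length Lp) Lp [] (lconstant 0) (le_n _) (HR0 r Hr) HS0 (Hcov0 r Hr))
      as [_ Hfin].
    apply (Hfin k k res H).
Qed.
Section Nu.
Variable n : nat.
Variable t1 : term.
Hypothesis Hw : wf (S n) t1.
Hypothesis G1 : Good (S n) t1.
Variable r : list R.
Hypothesis Hr : in_cube n r.

Lemma Hrl_n : length r = n.
Proof. apply Hr. Qed.

Definition InvSn D d := forall s, in_cube n s -> Choldsl D s ->
  forall w, 0 <= w <= 1 -> sem t1 (s ++ [w]) w -> w <= leval d s.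
Definition InvRn D d := Choldsl D r /\ 0 <= leval d r <= 1.
Definition RegionOKn C e := forall s', length s' = S n -> Choldsl C s' ->
  in_cube (S n) s' /\ sem t1 s' (leval e s').

Lemma reg_sem_n C e s x : RegionOKn C e -> length s = n -> Choldsl C (s ++ [x]) ->
  in_cube n s /\ 0 <= x <= 1 /\ sem t1 (s ++ [x]) (leval e (s ++ [x])).
Proof.
  intros Hreg Hs HC. destruct (Hreg (s ++ [x])) as [Hc Hsem]; auto.
  - rewrite length_app; simpl; lia.
  - apply in_cube_app in Hc as [H1 H2]. auto.
Qed.

Lemma nu_bs_nonempty C e d : RegionOKn C e -> Choldsl C (r ++ [leval d r]) ->
  0 <= leval d r -> bnds true n C <> [].
Proof.
  intros Hreg HC Hd0 Hb.
  assert (HC2 : Choldsl C (r ++ [-1])).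
  { unfold Choldsl; rewrite Forall_forall. intros c Hc.
    apply (c_ext_down n c r (leval d r) (-1) Hrl_n); [eapply Choldsl_In; eauto|lra|].
    intros Hg. assert (In (Defs.bound n c) (bnds true n C)) by (apply lower_In; eauto).
    rewrite Hb in H; destruct H. }
  destruct (reg_sem_n C e r (-1) Hreg Hrl_n HC2) as [_ [H _]]. lra.
Qed.

Lemma mono_t1_n s x w u v : in_cube n s -> 0 <= x <= 1 -> 0 <= w <= 1 -> x <= w ->
  sem t1 (s ++ [x]) u -> sem t1 (s ++ [w]) v -> u <= v.
Proof.
  intros Hs Hx Hw' Hxw Hu Hv. destruct (sem_all t1 (S n) Hw) as [_ [_ Mn]].
  apply (Mn _ _ _ _ (cube_app _ _ _ Hs Hx) (cube_app _ _ _ Hs Hw')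
           (Forall2_app_last _ _ _ _ (Forall2_refl s) Hxw) Hu Hv).
Qed.

Lemma nu_step D d C e N bj :
  InvRn D d -> InvSn D d -> RegionOKn C e -> Choldsl C (r ++ [leval d r]) ->
  NCond pf n r C e N -> In bj (bnds true n C) ->
  (forall b, In b (bnds true n C) -> leval b r <= leval bj r) ->
  InvRn (D ++ map (csubst n d) C ++ [N] ++ newcs true (bnds true n C) bj) (lsubst n e bj) /\
  InvSn (D ++ map (csubst n d) C ++ [N] ++ newcs true (bnds true n C) bj) (lsubst n e bj) /\
  leval (lsubst n e bj) r <= leval d r /\
  (forall x, Choldsl C (r ++ [x]) -> leval (lsubst n e bj) r < x).
Proof.
  intros [HDr Hdr] HS Hreg HC1 HN Hbj Hmax. pose proof Hrl_n as Hrl0.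
  set (bs := bnds true n C) in *.
  assert (Hbs : forall b, In b bs <-> exists c, In c C /\ 0 < gcoef n c /\ b = Defs.bound n c)
    by (intros; apply lower_In).
  destruct (proj1 (Hbs bj) Hbj) as [cj [Hcj [Hgj Hbjc]]].
  assert (Hregion : forall s, length s = n -> Choldsl C (s ++ [leval d s]) ->
    (forall b, In b bs -> leval b s <= leval bj s) ->
    forall x, leval bj s < x <= leval d s -> Choldsl C (s ++ [x])).
  { intros s Hs HC Hb x Hx. unfold Choldsl; rewrite Forall_forall. intros c Hc.
    apply (c_ext_down n c s (leval d s) x Hs); [eapply Choldsl_In; eauto|lra|].
    intros Hg. assert (In (Defs.bound n c) bs) by (apply Hbs; eauto).
    specialize (Hb _ H). lra. }
  assert (Hge_bj : forall s x, length s = n -> Choldsl C (s ++ [x]) -> leval bj s <= x).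
  { intros s x Hs HC. rewrite Hbjc. apply (c_lower n cj s x Hs Hgj). eapply Choldsl_In; eauto. }
  assert (HEapp : forall s x, length s = n -> leval e (s ++ [x]) = leval (ltrunc n e) s + coef n e * x)
    by (intros; apply leval_app; auto).
  assert (HS' : InvSn (D ++ map (csubst n d) C ++ [N] ++ newcs true bs bj) (lsubst n e bj)).
  { intros s Hs HD' w Hw' Hfix. pose proof (proj1 Hs) as Hls.
    apply Choldsl_app in HD' as [HD HD']. apply Choldsl_app in HD' as [HCd HD'].
    apply Choldsl_app in HD' as [HNs Hnew].
    apply (Choldsl_csubst n d C s Hls) in HCd.
    assert (HNs' : cholds N s) by (eapply Choldsl_In; [exact HNs|left; auto]).
    assert (Hnew2 := proj1 (newcs_holds true bs bj s) Hnew). clear Hnew. rename Hnew2 into Hnew.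
    simpl in Hnew.
    rewrite (leval_lsubst n) by auto.
    assert (Hdw : w <= leval d s) by (apply (HS s); auto).
    assert (Hdu : leval bj s <= leval d s) by (apply Hge_bj; auto).
    assert (Hmono : forall x, Choldsl C (s ++ [x]) -> w <= x -> w <= leval e (s ++ [x])).
    { intros x HCx Hxw. destruct (reg_sem_n C e s x Hreg Hls HCx) as [_ [Hx Hsx]].
      apply (mono_t1_n s w x _ _ Hs Hw' Hx Hxw Hfix Hsx). }
    assert (Hwu : w <= leval bj s).
    { destruct (Rle_dec w (leval bj s)) as [|Hn]; auto. exfalso.
      assert (HCw : Choldsl C (s ++ [w])) by (apply (Hregion s Hls HCd Hnew); lra).
      destruct (reg_sem_n C e s w Hreg Hls HCw) as [_ [_ Hsw]].
      apply (nfix n r C e N s w Hls HN HNs' HCw). apply (sem_det _ _ _ _ Hsw Hfix). }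
    destruct (Req_dec (leval d s) (leval bj s)) as [Heq|Hne].
    - rewrite <- Heq. apply Hmono; auto.
    - rewrite HEapp by auto. apply (aff_lim_down _ _ (leval d s)); [lra|].
      intros x Hx. rewrite <- HEapp by auto. apply Hmono; [|lra].
      apply (Hregion s Hls HCd Hnew); lra. }
  assert (HD'r : Choldsl (D ++ map (csubst n d) C ++ [N] ++ newcs true bs bj) r).
  { apply Choldsl_app; split; auto. apply Choldsl_app; split.
    - apply (Choldsl_csubst n d C r Hrl_n); auto.
    - apply Choldsl_app; split.
      + constructor; [|constructor]. apply (NCond_r n r C e N Hrl_n HN).
      + apply (proj2 (newcs_holds true bs bj r)). simpl. auto. }
  destruct (sem_all (TNu t1) n Hw) as [_ [Tnu _]].
  destruct (Tnu r Hr) as [v Hv]. pose proof Hv as [Hv01 [Hvfix Hvgr]].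
  assert (Hd'v : v <= leval (lsubst n e bj) r) by (apply (HS' r Hr HD'r v); auto).
  assert (Hdrv : v <= (leval d r)) by (apply (HS r Hr HDr v); auto).
  assert (HNr : cholds N r) by (apply (NCond_r n r C e N Hrl_n HN)).
  assert (Hed : leval e (r ++ [(leval d r)]) <= (leval d r)).
  { destruct (Rle_dec (leval e (r ++ [(leval d r)])) (leval d r)) as [|Hn]; auto. exfalso.
    destruct (reg_sem_n C e r (leval d r) Hreg Hrl_n HC1) as [_ [Hdr01 Hsd]].
    assert ((leval d r) <= v) by (apply (nu_postfixed n t1 r v (leval d r) _ Hw Hr Hv Hdr01 Hsd); lra).
    assert (v = (leval d r)) by lra. subst v.
    pose proof (sem_det _ _ _ _ Hsd Hvfix). lra. }
  assert (Hdu : (leval bj r) <= (leval d r)) by (apply Hge_bj; [exact Hrl_n|auto]).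
  assert (Hnew_r : forall b, In b bs -> leval b r <= leval bj r) by auto.
  assert (Hgu : leval e (r ++ [(leval bj r)]) <= (leval bj r)).
  { destruct (Req_dec (leval d r) (leval bj r)) as [Heq|Hne].
    - rewrite <- Heq; auto.
    - rewrite HEapp by auto. apply (aff_sign_down _ _ (leval d r)); [lra| rewrite <- HEapp by auto; auto|].
      intros x Hx E. rewrite <- HEapp in E by auto.
      apply (nfix n r C e N r x Hrl_n HN HNr); [|exact E].
      apply (Hregion r Hrl_n HC1 Hnew_r); lra. }
  rewrite (leval_lsubst n e bj r Hrl_n) in *.
  split; [|split; [|split]].
  - split; auto. rewrite (leval_lsubst n e bj r Hrl_n). lra.
  - exact HS'.
  - lra.
  - intros x HCx. pose proof (Hge_bj r x Hrl_n HCx) as Hxu.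
    destruct (Req_dec x (leval bj r)) as [Hxe|Hne]; [|lra].
    destruct (Req_dec (leval e (r ++ [(leval bj r)])) (leval bj r)) as [E|]; [|lra].
    exfalso. subst x. apply (nfix n r C e N r (leval bj r) Hrl_n HN HNr HCx E).
Qed.

Lemma nu_ret D d C e res :
  InvRn D d -> InvSn D d -> RegionOKn C e -> Choldsl C (r ++ [leval d r]) ->
  DirectRes n r C e D d res ->
  Choldsl (fst res) r /\
  (forall s, length s = n -> Choldsl (fst res) s -> in_cube n s /\ sem (TNu t1) s (leval (snd res) s)).
Proof.
  intros [HDr Hdr] HS Hreg HC1 [[Hq [Hh ->]]|[Hq [HCf ->]]]; simpl; pose proof Hrl_n as Hrl0.
  - split.
    + apply Choldsl_app; split; auto. apply Choldsl_app; split.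
      * apply (Choldsl_csubst n d C r Hrl_n); auto.
      * constructor; [|constructor; [|constructor]]; simpl; rewrite leval_lconstant; lra.
    + intros s Hs H. apply Choldsl_app in H as [HD H]. apply Choldsl_app in H as [HCd H].
      apply (Choldsl_csubst n d C s Hs) in HCd.
      pose proof (Choldsl_In _ _ _ H (or_introl eq_refl)) as H1.
      pose proof (Choldsl_In _ _ _ H (or_intror (or_introl eq_refl))) as H2.
      simpl in H1, H2. rewrite leval_lconstant in H1, H2.
      destruct (reg_sem_n C e s (leval d s) Hreg Hs HCd) as [Hcs [Hd01 Hsem]].
      rewrite (leval_app n) in Hsem by auto. rewrite Hq in Hsem.
      replace (leval (ltrunc n e) s + 1 * leval d s) with (leval d s) in Hsem by lra.
      split; [exact Hcs|]. simpl. split; [exact Hd01|]. split; [exact Hsem|].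
      intros w Hw' Hf. apply (HS s); auto.
  - split.
    + apply Choldsl_app; split; auto. apply Choldsl_app; split.
      * apply (Choldsl_csubst n d C r Hrl_n); auto.
      * apply (Choldsl_csubst n (fval n e) C r Hrl_n); auto.
    + intros s Hs H. apply Choldsl_app in H as [HD H]. apply Choldsl_app in H as [HCd HCf'].
      apply (Choldsl_csubst n d C s Hs) in HCd. apply (Choldsl_csubst n _ C s Hs) in HCf'.
      destruct (reg_sem_n C e s _ Hreg Hs HCf') as [Hcs [Hf01 Hsem]].
      assert (Hq' : 1 - coef n e <> 0) by (intro; apply Hq; lra).
      assert (Ef : leval e (s ++ [leval (fval n e) s]) = leval (fval n e) s).
      { rewrite (leval_app n) by auto. rewrite fval_eval. field. auto. }
      rewrite Ef in Hsem.
      split; [exact Hcs|]. simpl. split; [exact Hf01|]. split; [exact Hsem|].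
      intros w Hw' Hfw. pose proof (HS s Hcs HD w Hw' Hfw) as Hdw.
      destruct (Rle_dec w (leval (fval n e) s)) as [|Hn]; auto. exfalso.
      assert (HCw : Choldsl C (s ++ [w])).
      { unfold Choldsl; rewrite Forall_forall; intros c Hc.
        apply (c_convex n c s (leval (fval n e) s) (leval d s) w Hs);
          [eapply Choldsl_In; eauto|eapply Choldsl_In; eauto|lra]. }
      destruct (reg_sem_n C e s w Hreg Hs HCw) as [_ [_ Hsw]].
      pose proof (sem_det _ _ _ _ Hsw Hfw) as Ew.
      rewrite (leval_app n) in Ew by auto.
      pose proof (solve_fix _ _ _ Hq Ew). rewrite fval_eval in Hn. lra.
Qed.

Lemma nu_corr k : forall j D d res, InvRn D d -> InvSn D d ->
  mloop pf pmin pmax (alg k (S n) t1) n r true j D d = Some res ->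
  Choldsl (fst res) r /\
  (forall s, length s = n -> Choldsl (fst res) s -> in_cube n s /\ sem (TNu t1) s (leval (snd res) s)).
Proof.
  induction j as [|j IH]; intros D d res HR HS H; [discriminate|].
  rewrite mloop_S in H.
  destruct (alg k (S n) t1 (r ++ [leval d r])) as [[C e]|] eqn:EA;
    [|rewrite mbody_none in H by auto; discriminate].
  destruct G1 as [_ [Co _]].
  assert (Hin : in_cube (S n) (r ++ [leval d r])) by (apply cube_app; [exact Hr|apply HR]).
  destruct (Co _ _ _ Hin EA) as [HC1 HC2]. simpl in HC1, HC2.
  assert (Hreg : RegionOKn C e) by exact HC2.
  assert (Hne := nu_bs_nonempty C e d Hreg HC1 (proj1 (proj2 HR))).
  destruct (mbody_cases pf pmin pmax (mloop pf pmin pmax (alg k (S n) t1) n r true j) _ n r true D d C e EA Hne)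
    as [[res' [E Hd]]|[N [HN E]]]; rewrite E in H.
  - injection H as <-. apply (nu_ret D d C e res'); auto.
  - change (pick pmin pmax true (bnds true n C) r) with (pmax (bnds true n C) r) in H.
    destruct (Hpmax (bnds true n C) r Hne) as [Hbj Hmax].
    destruct (nu_step D d C e N _ HR HS Hreg HC1 HN Hbj Hmax) as [HR' [HS' _]].
    apply (IH _ _ _ HR' HS' H).
Qed.

Variable Lp : list result.
Hypothesis HLp : forall r' fuel rho, in_cube (S n) r' -> alg fuel (S n) t1 r' = Some rho -> In rho Lp.

Lemma nu_tf : forall m Rem D d, (length Rem <= m)%nat -> InvRn D d -> InvSn D d ->
  (forall x fuel rho, 0 <= x <= 1 -> x <= leval d r -> alg fuel (S n) t1 (r ++ [x]) = Some rho -> In rho Rem) ->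
  (exists K, forall k j, (K <= k)%nat -> (K <= j)%nat ->
     exists res, mloop pf pmin pmax (alg k (S n) t1) n r true j D d = Some res) /\
  (forall k j res, mloop pf pmin pmax (alg k (S n) t1) n r true j D d = Some res ->
     In res (allres true Lp n m D d)).
Proof.
  induction m as [|m IH]; intros Rem D d Hlen HR HS Hcov;
  pose proof Hrl_n as Hrl0; pose proof G1 as [T1 [Co _]];
  (assert (Hin : in_cube (S n) (r ++ [leval d r])) by (apply cube_app; [exact Hr|apply HR]));
  destruct (T1 _ Hin) as [F0 [[C e] EA0]];
  assert (HinRem := Hcov (leval d r) F0 (C, e) (proj2 HR) (Rle_refl _) EA0).
  - destruct Rem; [destruct HinRem|simpl in Hlen; lia].
  - destruct (Co _ _ _ Hin EA0) as [HC1 HC2]. simpl in HC1, HC2.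
    assert (Hreg : RegionOKn C e) by exact HC2.
    assert (Hne := nu_bs_nonempty C e d Hreg HC1 (proj1 (proj2 HR))).
    assert (EAk : forall k, (F0 <= k)%nat -> alg k (S n) t1 (r ++ [leval d r]) = Some (C, e))
      by (intros; eapply alg_mono_le; eauto).
    assert (EAany : forall k rho, alg k (S n) t1 (r ++ [leval d r]) = Some rho -> rho = (C, e))
      by (intros; eapply alg_det; eauto).
    assert (HCeLp : In (C, e) Lp) by (eapply HLp; eauto).
    destruct (classic (exists res0, DirectRes n r C e D d res0)) as [[res0 Hd0]|Hnd].
    + split.
      * exists (S F0). intros k j Hk Hj. destruct j as [|j]; [lia|]. rewrite mloop_S.
        destruct (mbody_cases pf pmin pmax (mloop pf pmin pmax (alg k (S n) t1) n r true j) _ n r true D d C e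
                    (EAk k ltac:(lia)) Hne) as [[res' [E _]]|[N [HN _]]].
        -- eauto.
        -- exfalso; eapply NCond_DirectRes; eauto.
      * intros k j res H. destruct j as [|j]; [discriminate|]. rewrite mloop_S in H.
        destruct (alg k (S n) t1 (r ++ [leval d r])) as [rho|] eqn:EA;
          [|rewrite mbody_none in H by auto; discriminate].
        rewrite (EAany _ _ EA) in EA.
        destruct (mbody_cases pf pmin pmax (mloop pf pmin pmax (alg k (S n) t1) n r true j) _ n r true D d C e
                    EA Hne) as [[res' [E Hd]]|[N [HN _]]].
        -- rewrite E in H. injection H as <-. eapply allres_in_direct; eauto.
        -- exfalso; eapply NCond_DirectRes; eauto.
    + destruct (mbody_cases pf pmin pmax (fun _ _ => None) _ n r true D d C e EA0 Hne)
        as [[res' [_ Hd]]|[N [HN _]]]; [exfalso; apply Hnd; eauto|].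
      destruct (Hpmax (bnds true n C) r Hne) as [Hbj Hmax].
      destruct (nu_step D d C e N _ HR HS Hreg HC1 HN Hbj Hmax) as [HR' [HS' [Hdd' Hprog]]].
      destruct (remove_one Rem (C, e)) as [Rem' [_ [Hlt Hsub]]].
      specialize (Hlt HinRem).
      match type of HR' with InvRn ?D' ?d' =>
        assert (Hcov' : forall x fuel rho, 0 <= x <= 1 -> x <= leval d' r ->
                  alg fuel (S n) t1 (r ++ [x]) = Some rho -> In rho Rem');
        [|destruct (IH Rem' D' d' ltac:(lia) HR' HS' Hcov') as [[K HK] Hfin]] end.
      { intros x fuel rho Hx Hdx E. apply Hsub; [apply (Hcov x fuel rho Hx); [lra|auto]|].
        intros ->. destruct (Co (r ++ [x]) fuel (C, e) (cube_app _ _ _ Hr Hx) E) as [HCx _].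
        simpl in HCx. specialize (Hprog x HCx). lra. }
      split.
      * exists (S (Nat.max F0 K)). intros k j Hk Hj. destruct j as [|j]; [lia|]. rewrite mloop_S.
        destruct (mbody_cases pf pmin pmax (mloop pf pmin pmax (alg k (S n) t1) n r true j) _ n r true D d C e
                    (EAk k ltac:(lia)) Hne) as [[res' [E Hd]]|[N' [HN' E]]].
        -- exfalso; apply Hnd; eauto.
        -- rewrite (NCond_uniq _ _ _ _ _ _ HN' HN) in E. rewrite E. apply HK; lia.
      * intros k j res H. destruct j as [|j]; [discriminate|]. rewrite mloop_S in H.
        destruct (alg k (S n) t1 (r ++ [leval d r])) as [rho|] eqn:EA;
          [|rewrite mbody_none in H by auto; discriminate].
        rewrite (EAany _ _ EA) in EA.
        destruct (mbody_cases pf pmin pmax (mloop pf pmin pmax (alg k (S n) t1) n r true j) _ n r true D d C e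
                    EA Hne) as [[res' [E Hd]]|[N' [HN' E]]].
        -- exfalso; apply Hnd; eauto.
        -- rewrite (NCond_uniq _ _ _ _ _ _ HN' HN) in E. rewrite E in H.
           eapply allres_in_next; [exact HCeLp|apply (NCond_in _ _ _ _ _ HN)|exact Hbj|].
           apply (Hfin k j res H).
Qed.
End Nu.

Lemma good_nu n t1 : wf (S n) t1 -> Good (S n) t1 -> Good n (TNu t1).
Proof.
  intros Hw G1. pose proof G1 as [T1 [Co1 [Lp HLp]]].
  assert (HR0 : forall r, in_cube n r -> InvRn r [] (lconstant 1)).
  { intros r Hr. split; [constructor|]. rewrite leval_lconstant; lra. }
  assert (HS0 : InvSn n t1 [] (lconstant 1)).
  { intros s Hs _ w Hw' _. rewrite leval_lconstant; lra. }
  assert (Hcov0 : forall r, in_cube n r -> forall x fuel rho, 0 <= x <= 1 ->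
     x <= leval (lconstant 1) r -> alg fuel (S n) t1 (r ++ [x]) = Some rho -> In rho Lp).
  { intros r Hr x fuel rho Hx _ E. apply (HLp (r ++ [x]) fuel); auto. apply cube_app; auto. }
  split; [|split].
  - intros r Hr.
    destruct (nu_tf n t1 Hw G1 r Hr Lp HLp (length Lp) Lp [] (lconstant 1) (le_n _) (HR0 r Hr) HS0 (Hcov0 r Hr))
      as [[K HK] _].
    destruct (HK K K (le_n _) (le_n _)) as [res Hres].
    exists (S K), res. rewrite alg_nu. exact Hres.
  - intros r fuel res Hr H. destruct fuel as [|k]; [discriminate|]. rewrite alg_nu in H.
    apply (nu_corr n t1 Hw G1 r Hr k k [] (lconstant 1) res (HR0 r Hr) HS0 H).
  - exists (allres true Lp n (length Lp) [] (lconstant 1)).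
    intros r fuel res Hr H. destruct fuel as [|k]; [discriminate|]. rewrite alg_nu in H.
    destruct (nu_tf n t1 Hw G1 r Hr Lp HLp (length Lp) Lp [] (lconstant 1) (le_n _) (HR0 r Hr) HS0 (Hcov0 r Hr))
      as [_ Hfin].
    apply (Hfin k k res H).
Qed.
Lemma main_good t : forall n, wf n t -> Good n t.
Proof.
  induction t; intros m Hw; simpl in Hw.
  - apply (good_atom m (TVar n) (lvar n)); [reflexivity|].
    intros s _. simpl. rewrite leval_lvar. reflexivity.
  - apply (good_atom m TZero (lconstant 0)); [reflexivity|].
    intros s _. simpl. rewrite leval_lconstant. reflexivity.
  - apply (good_atom m TOne (lconstant 1)); [reflexivity|].
    intros s _. simpl. rewrite leval_lconstant. reflexivity.
  - apply good_scale; [apply Hw|apply IHt; apply Hw].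
  - apply good_join; [apply IHt1|apply IHt2]; apply Hw.
  - apply good_meet; [apply IHt1|apply IHt2]; apply Hw.
  - apply good_oplus; [apply IHt1|apply IHt2]; apply Hw.
  - apply good_odot; [apply IHt1|apply IHt2]; apply Hw.
  - apply good_mu; auto.
  - apply good_nu; auto.
Qed.

End Main.

Lemma filter_exists {A : Type} (P : A -> Prop) (l : list A) :
  exists l', forall x, In x l' <-> In x l /\ P x.
Proof.
  induction l as [|a l [l' IH]].
  - exists []. simpl. tauto.
  - destruct (classic (P a)) as [Ha|Ha].
    + exists (a :: l'). intros x. simpl. rewrite IH. split.
      * intros [<-|H]; tauto.
      * intros [[<-|H] HP]; tauto.
    + exists l'. intros x. simpl. rewrite IH. split.
      * tauto.
      * intros [[<-|H] HP]; tauto.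
Qed.

Theorem mainTheorem2
  (pf : list constr -> list R -> constr)
  (pmin : list linexp -> list R -> linexp)
  (pmax : list linexp -> list R -> linexp)
  (Hpf : pick_false_spec pf) (Hpmin : pick_min_spec pmin) (Hpmax : pick_max_spec pmax)
  (n : nat) (t : term) (Ht : wf n t) :
  (forall r, in_cube n r ->
     (exists res, alg_returns pf pmin pmax n t r res) /\
     (forall res, alg_returns pf pmin pmax n t r res ->
        Choldsl (fst res) r /\
        (forall s, length s = n -> Choldsl (fst res) s ->
           in_cube n s /\ sem t s (leval (snd res) s)))) /\
  (exists L : list result,
     (forall r res, in_cube n r -> alg_returns pf pmin pmax n t r res -> In res L) /\
     (forall res, In res L -> exists r, in_cube n r /\ alg_returns pf pmin pmax n t r res) /\
     represents n L t).
Proof.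
  destruct (main_good pf pmin pmax Hpf Hpmin Hpmax t n Ht) as [T [Co [L0 HL0]]].
  destruct (filter_exists (fun res => exists r, in_cube n r /\ alg_returns pf pmin pmax n t r res) L0)
    as [L HL].
  split.
  - intros r Hr. split.
    + destruct (T r Hr) as [fuel [res H]]. exists res, fuel; auto.
    + intros res [fuel H]. apply (Co r fuel res Hr H).
  - exists L. split; [|split].
    + intros r res Hr [fuel H]. apply HL. split; [eapply HL0; eauto|].
      exists r; split; auto. exists fuel; auto.
    + intros res Hin. apply HL in Hin. tauto.
    + split.
      * intros r Hr. destruct (T r Hr) as [fuel [res H]]. exists res. split.
        -- apply HL. split; [eapply HL0; eauto|]. exists r; split; auto. exists fuel; auto.
        -- apply (Co r fuel res Hr H).
      * intros Ce r Hin Hr HC. apply HL in Hin as [_ [r0 [Hr0 [fuel H]]]].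
        destruct (Co r0 fuel Ce Hr0 H) as [_ P2].
        apply (P2 r (proj1 Hr) HC).
Qed.
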